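(* Let $C,D,E$ be finite category presentations. If $\mathcal P:[\![C]\!]\nrightarrow[\![D]\!]$ and $\mathcal Q:[\![D]\!]\nrightarrow[\![E]\!]$ are profunctors with $\mathcal P\cong[\![P]\!]$ and $\mathcal Q\cong[\![Q]\!]$ for finite curryable profunctor presentations $P:C\nrightarrow D$ and $Q:D\nrightarrow E$, then there is a finite curryable profunctor presentation $R:C\nrightarrow E$ with $\mathcal P\odot\mathcal Q\cong[\![R]\!]$.
   Context: Category presentations $C$: sorts, function symbols $f:c\to c'$, equations $C_E$ between parallel paths (composable lists of function symbols, possibly empty); finite if all these sets are finite. Provable equality $\approx_C$: smallest equivalence relation on paths containing $C_E$ and closed under concatenation with composable function symbols; $[\![C]\!]$: sorts as objects, $\approx_C$-classes of paths as morphisms. Profunctors $\mathcal P:\mathcal C\nrightarrow\mathcal D$: functors $\mathcal C^{op}\times\mathcal D\to\mathbf{Set}$ (equivalently categories over $\mathbf 2=\{0\to1\}$ with fibres $\mathcal C,\mathcal D$); isomorphisms are natural isomorphisms. Composite: $(\mathcal P\odot\mathcal Q)(c,e)=\int^{d}\mathcal P(c,d)\times\mathcal Q(d,e)$, the quotient of $\coprod_d\mathcal P(c,d)\times\mathcal Q(d,e)$ by the equivalence relation generated by $(p,\mathcal Q(g,1)q')\sim(\mathcal P(1,g)p,q')$ for $g:d\to d'$. Uncurried presentations $P:C\nrightarrow D$: a set $\mathrm{Fun}(P)$ of symbols $x:c\to d$ ($c$ a $C$-sort, $d$ a $D$-sort) and a set $P_E$ of equations between cross-paths (paths from a $C$-sort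 to a $D$-sort) of the category presentation $|P|$ with sorts $\mathrm{Sort}(C)+\mathrm{Sort}(D)$, symbols $\mathrm{Fun}(C)+\mathrm{Fun}(P)+\mathrm{Fun}(D)$ and equations $C_E+P_E+D_E$; $\approx_P$ is provable equality of $|P|$ restricted to cross-paths; $[\![P]\!]=[\![|P|]\!]$ with $C$-sorts over $0$ and $D$-sorts over $1$. Finite if $\mathrm{Fun}(P)$ and $P_E$ are finite. A short left cross-path is $f.p$ with $f\in\mathrm{Fun}(C)$, $p\in\mathrm{Fun}(P)$; a right cross-path is $p.g$ with $p\in\mathrm{Fun}(P)$, $g$ a $D$-path. For a $C$-sort $c$, $P^c$ is the $D$-instance presentation whose generators are the symbols $p:c\to d$ of $P$ and whose equations are those of $P_E$ with source $c$ (its provable equality being the smallest equivalence relation on its terms $p.g$ containing these equations, closed under right concatenation with $D$-function symbols, and identifying $t.g,t.g'$ for equations $g=g'$ of $D_E$). $P$ is nongenerative if every short left cross-path is $\approx_P$-equal to a right cross-path, conservative if right cross-paths $t,t'$ from $c$ with $t\approx_P t'$ are provably equal in $P^c$, and curryable if it is both nongenerative and conservative. *)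

(* Defs.v *)
From Stdlib Require Import List Relations ClassicalEpsilon.
Import ListNotations.

Set Implicit Arguments.

Definition fin_type (T : Type) : Prop := exists l : list T, forall x : T, In x l.

(* Equations are given as a predicate on (source, target, lhs, rhs);
   paths are lists of symbols in diagrammatic order (f.g = [f; g]). *)
Record catpres := CatPres {
  cp_sort : Type;
  cp_fun  : Type;
  cp_src  : cp_fun -> cp_sort;
  cp_tgt  : cp_fun -> cp_sort;
  cp_eq   : cp_sort -> cp_sort -> list cp_fun -> list cp_fun -> Prop }.

Fixpoint valid (C : catpres) (a : cp_sort C) (l : list (cp_fun C)) (b : cp_sort C) : Prop :=
  match l with
  | nil => a = b
  | f :: l' => cp_src C f = a /\ valid C (cp_tgt C f) l' b
  end.

Definition catpres_wf (C : catpres) : Prop :=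
  forall a b l l', cp_eq C a b l l' -> valid C a l b /\ valid C a l' b.

Definition catpres_finite (C : catpres) : Prop :=
  fin_type (cp_sort C) /\ fin_type (cp_fun C) /\
  exists L, forall a b l l', cp_eq C a b l l' -> In (a, b, l, l') L.

Inductive peq (C : catpres) : cp_sort C -> cp_sort C -> list (cp_fun C) -> list (cp_fun C) -> Prop :=
| peq_refl a b l : valid C a l b -> peq C a b l l
| peq_ax a b l l' : cp_eq C a b l l' -> peq C a b l l'
| peq_sym a b l l' : peq C a b l l' -> peq C a b l' l
| peq_trans a b l l' l'' : peq C a b l l' -> peq C a b l' l'' -> peq C a b l l''
| peq_pre f b l l' : peq C (cp_tgt C f) b l l' -> peq C (cp_src C f) b (f :: l) (f :: l')
| peq_post a f l l' : peq C a (cp_src C f) l l' ->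
    peq C a (cp_tgt C f) (l ++ [f]) (l' ++ [f]).

Definition vpath (C : catpres) (a b : cp_sort C) : Type := {l : list (cp_fun C) | valid C a l b}.

Lemma valid_cat (C : catpres) a l b l' c :
  valid C a l b -> valid C b l' c -> valid C a (l ++ l') c.
Proof.
  revert a; induction l as [|f l IH]; simpl; intros a H1 H2.
  - subst; exact H2.
  - destruct H1 as [H1 H3]; split; [exact H1 | exact (IH _ H3 H2)].
Qed.

Definition vcat (C : catpres) (a b c : cp_sort C) (x : vpath C a b) (y : vpath C b c) : vpath C a c :=
  exist _ (proj1_sig x ++ proj1_sig y) (@valid_cat C a _ b _ c (proj2_sig x) (proj2_sig y)).

Definition quot (X : Type) (R : X -> X -> Prop) : Type :=
  {A : X -> Prop | exists x, A = clos_refl_sym_trans X R x}.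
Definition cls (X : Type) (R : X -> X -> Prop) (x : X) : quot R :=
  exist _ (clos_refl_sym_trans X R x) (ex_intro _ x eq_refl).
Definition rep (X : Type) (R : X -> X -> Prop) (q : quot R) : X :=
  proj1_sig (constructive_indefinite_description _ (proj2_sig q)).

Record Cat := MkCat {
  ob   : Type;
  hom  : ob -> ob -> Type;
  idm  : forall a, hom a a;
  comp : forall a b c, hom a b -> hom b c -> hom a c }.
Arguments idm {_} _.
Arguments comp {_ a b c} _ _.

Definition sem_hom (C : catpres) (a b : cp_sort C) : Type :=
  quot (fun x y : vpath C a b => peq C a b (proj1_sig x) (proj1_sig y)).

Definition sem (C : catpres) : Cat :=
  {| ob := cp_sort C;
     hom := sem_hom C;
     idm := fun a => cls _ (exist (fun l => valid C a l a) nil eq_refl);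
     comp := fun a b c h k => cls _ (vcat (rep h) (rep k)) |}.

Record Prof (A B : Cat) := MkProf {
  pobj : ob A -> ob B -> Type;
  pact : forall a a' b b', hom A a' a -> hom B b b' -> pobj a b -> pobj a' b' }.
Arguments pobj {A B} _ _ _.
Arguments pact {A B} _ {a a' b b'} _ _ _.

Definition is_prof (A B : Cat) (P : Prof A B) : Prop :=
  (forall a b (x : pobj P a b), pact P (idm a) (idm b) x = x) /\
  (forall a a' a'' b b' b'' (h : hom A a' a) (h' : hom A a'' a')
          (k : hom B b b') (k' : hom B b' b'') (x : pobj P a b),
      pact P (comp h' h) (comp k k') x = pact P h' k' (pact P h k x)).

Definition prof_iso (A B : Cat) (P Q : Prof A B) : Prop :=
  exists al : forall a b, pobj P a b -> pobj Q a b,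
    (forall a b, exists be : pobj Q a b -> pobj P a b,
        (forall x, be (al a b x) = x) /\ (forall y, al a b (be y) = y)) /\
    (forall a a' b b' (h : hom A a' a) (k : hom B b b') (x : pobj P a b),
        al a' b' (pact P h k x) = pact Q h k (al a b x)).

Definition pc_car (A B E : Cat) (P : Prof A B) (Q : Prof B E) (a : ob A) (e : ob E) : Type :=
  {b : ob B & (pobj P a b * pobj Q b e)%type}.

Definition pc_rel (A B E : Cat) (P : Prof A B) (Q : Prof B E) (a : ob A) (e : ob E)
  (x y : pc_car P Q a e) : Prop :=
  exists b b' (g : hom B b b') (p : pobj P a b) (q' : pobj Q b' e),
    x = existT _ b (p, pact Q g (idm e) q') /\
    y = existT _ b' (pact P (idm a) g p, q').

Definition pcomp (A B E : Cat) (P : Prof A B) (Q : Prof B E) : Prof A E :=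
  {| pobj := fun a e => quot (@pc_rel A B E P Q a e);
     pact := fun a a' e e' h k z =>
       let w := rep z in
       cls _ (existT (fun b => (pobj P a' b * pobj Q b e')%type) (projT1 w)
                (pact P h (idm _) (fst (projT2 w)), pact Q (idm _) k (snd (projT2 w)))) |}.

Record profpres (C D : catpres) := ProfPres {
  pp_fun : Type;
  pp_src : pp_fun -> cp_sort C;
  pp_tgt : pp_fun -> cp_sort D;
  pp_eq  : cp_sort C -> cp_sort D ->
           list (cp_fun C + (pp_fun + cp_fun D)) ->
           list (cp_fun C + (pp_fun + cp_fun D)) -> Prop }.

Section Total.
Variables (C D : catpres) (P : profpres C D).

Definition tsym : Type := (cp_fun C + (pp_fun P + cp_fun D))%type.

Definition t_src (s : tsym) : cp_sort C + cp_sort D :=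
  match s with
  | inl f => inl (cp_src C f)
  | inr (inl p) => inl (pp_src P p)
  | inr (inr g) => inr (cp_src D g)
  end.
Definition t_tgt (s : tsym) : cp_sort C + cp_sort D :=
  match s with
  | inl f => inl (cp_tgt C f)
  | inr (inl p) => inr (pp_tgt P p)
  | inr (inr g) => inr (cp_tgt D g)
  end.

Definition dsym (g : cp_fun D) : tsym := inr (inr g).
Definition csym (f : cp_fun C) : tsym := inl f.

Definition t_eq (a b : cp_sort C + cp_sort D) (l l' : list tsym) : Prop :=
  (exists c c' k k', a = inl c /\ b = inl c' /\ l = map csym k /\ l' = map csym k' /\
                     cp_eq C c c' k k') \/
  (exists d d' k k', a = inr d /\ b = inr d' /\ l = map dsym k /\ l' = map dsym k' /\
                     cp_eq D d d' k k') \/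
  (exists c d, a = inl c /\ b = inr d /\ pp_eq P c d l l').

Definition total : catpres := CatPres t_src t_tgt t_eq.
End Total.

Arguments tsym {C D} P.
Arguments total {C D} P.
Arguments dsym {C D P} g.
Arguments csym {C D P} f.

Definition profpres_wf (C D : catpres) (P : profpres C D) : Prop :=
  forall c d l l', pp_eq P c d l l' ->
    valid (total P) (inl c) l (inr d) /\ valid (total P) (inl c) l' (inr d).

Definition profpres_finite (C D : catpres) (P : profpres C D) : Prop :=
  fin_type (pp_fun P) /\
  exists L, forall c d l l', pp_eq P c d l l' -> In (c, d, l, l') L.

Definition is_rcp (C D : catpres) (P : profpres C D) (c : cp_sort C) (d : cp_sort D)
  (t : list (tsym P)) : Prop :=
  exists (p : pp_fun P) (g : list (cp_fun D)),
    pp_src P p = c /\ valid D (pp_tgt P p) g d /\ t = inr (inl p) :: map dsym g.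

Arguments is_rcp {C D} P c d t.

(* provable equality of the D-instance presentation P^c *)
Inductive inst_eq (C D : catpres) (P : profpres C D) (c : cp_sort C)
  : cp_sort D -> list (tsym P) -> list (tsym P) -> Prop :=
| ie_ax d l l' : pp_eq P c d l l' -> is_rcp P c d l -> is_rcp P c d l' -> @inst_eq C D P c d l l'
| ie_refl d l : is_rcp P c d l -> @inst_eq C D P c d l l
| ie_sym d l l' : @inst_eq C D P c d l l' -> @inst_eq C D P c d l' l
| ie_trans d l l' l'' : @inst_eq C D P c d l l' -> @inst_eq C D P c d l' l'' -> @inst_eq C D P c d l l''
| ie_post l l' g : @inst_eq C D P c (cp_src D g) l l' ->
    @inst_eq C D P c (cp_tgt D g) (l ++ [dsym g]) (l' ++ [dsym g])
| ie_deq a b t k k' : is_rcp P c a t -> cp_eq D a b k k' ->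
    @inst_eq C D P c b (t ++ map dsym k) (t ++ map dsym k').

Arguments inst_eq {C D} P c _ _ _.

Definition nongenerative (C D : catpres) (P : profpres C D) : Prop :=
  forall (f : cp_fun C) (p : pp_fun P), cp_tgt C f = pp_src P p ->
    exists t, is_rcp P (cp_src C f) (pp_tgt P p) t /\
      peq (total P) (inl (cp_src C f)) (inr (pp_tgt P p)) [csym f; inr (inl p)] t.

Definition conservative (C D : catpres) (P : profpres C D) : Prop :=
  forall c d t t', is_rcp P c d t -> is_rcp P c d t' ->
    peq (total P) (inl c) (inr d) t t' -> inst_eq P c d t t'.

Definition curryable (C D : catpres) (P : profpres C D) : Prop :=
  nongenerative P /\ conservative P.

Lemma valid_liftC (C D : catpres) (P : profpres C D) a l b :
  valid C a l b -> valid (total P) (inl a) (map (@csym C D P) l) (inl b).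
Proof.
  revert a; induction l as [|f l IH]; simpl; intros a H.
  - subst; reflexivity.
  - destruct H as [H1 H2]; split; [unfold csym; simpl; rewrite H1; reflexivity | exact (IH _ H2)].
Qed.

Lemma valid_liftD (C D : catpres) (P : profpres C D) a l b :
  valid D a l b -> valid (total P) (inr a) (map (@dsym C D P) l) (inr b).
Proof.
  revert a; induction l as [|f l IH]; simpl; intros a H.
  - subst; reflexivity.
  - destruct H as [H1 H2]; split; [unfold dsym; simpl; rewrite H1; reflexivity | exact (IH _ H2)].
Qed.

Definition liftC (C D : catpres) (P : profpres C D) (a b : cp_sort C) (h : vpath C a b)
  : vpath (total P) (inl a) (inl b) :=
  exist _ (map csym (proj1_sig h)) (@valid_liftC C D P a _ b (proj2_sig h)).
Definition liftD (C D : catpres) (P : profpres C D) (a b : cp_sort D) (h : vpath D a b)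
  : vpath (total P) (inr a) (inr b) :=
  exist _ (map dsym (proj1_sig h)) (@valid_liftD C D P a _ b (proj2_sig h)).

Definition semP_obj (C D : catpres) (P : profpres C D) (c : cp_sort C) (d : cp_sort D) : Type :=
  sem_hom (total P) (inl c) (inr d).

Definition semP (C D : catpres) (P : profpres C D) : Prof (sem C) (sem D) :=
  @MkProf (sem C) (sem D) (semP_obj P)
    (fun c c' d d' (h : sem_hom C c' c) (k : sem_hom D d d') (x : semP_obj P c d) =>
       cls _ (vcat (vcat (liftC P (rep h)) (rep x)) (liftD P (rep k)))).

(* Main.v *)
Require Import Defs.
From Stdlib Require Import List Relations ClassicalEpsilon FunctionalExtensionality PropExtensionality ProofIrrelevance.
Import ListNotations.
Set Implicit Arguments.

Lemma sig_eq (A : Type) (Pr : A -> Prop) (a b : A) (pa : Pr a) (pb : Pr b) :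
  a = b -> exist Pr a pa = exist Pr b pb.
Proof. intros ->. f_equal. apply proof_irrelevance. Qed.

Lemma cls_eq (X : Type) (R : X -> X -> Prop) (x y : X) :
  clos_refl_sym_trans X R x y -> cls R x = cls R y.
Proof.
  intro H. unfold cls. apply sig_eq.
  apply functional_extensionality; intro z; apply propositional_extensionality; split; intro Hz.
  - eapply rst_trans; [apply rst_sym; exact H | exact Hz].
  - eapply rst_trans; [exact H | exact Hz].
Qed.

Lemma cls_inj (X : Type) (R : X -> X -> Prop) (x y : X) :
  cls R x = cls R y -> clos_refl_sym_trans X R x y.
Proof.
  intro H. apply (f_equal (@proj1_sig _ _)) in H. simpl in H.
  assert (H2 := equal_f H y). rewrite H2. apply rst_refl.
Qed.

Lemma cls_rep (X : Type) (R : X -> X -> Prop) (q : quot R) : cls R (rep q) = q.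
Proof.
  destruct q as [A HA]. unfold rep; simpl.
  destruct (constructive_indefinite_description _ HA) as [x Hx]; simpl.
  unfold cls. apply sig_eq. symmetry; exact Hx.
Qed.

Lemma rep_cls (X : Type) (R : X -> X -> Prop) (x : X) :
  clos_refl_sym_trans X R (rep (cls R x)) x.
Proof. apply cls_inj. rewrite cls_rep. reflexivity. Qed.

Lemma valid_app (C : catpres) a l1 l2 b :
  valid C a (l1 ++ l2) b -> exists m, valid C a l1 m /\ valid C m l2 b.
Proof.
  revert a; induction l1 as [|f l IH]; simpl; intros a H.
  - exists a; split; auto.
  - destruct H as [H1 H2]. destruct (IH _ H2) as [m [Hm1 Hm2]]. exists m; auto.
Qed.

Lemma peq_valid (C : catpres) : catpres_wf C -> forall a b l l',
  peq C a b l l' -> valid C a l b /\ valid C a l' b.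
Proof.
  intros wf a b l l' H; induction H.
  - auto.
  - apply wf; auto.
  - tauto.
  - tauto.
  - simpl; tauto.
  - destruct IHpeq; split; eapply valid_cat; eauto; simpl; auto.
Qed.

Lemma peq_app_r (C : catpres) t : forall a b c l l',
  peq C a b l l' -> valid C b t c -> peq C a c (l ++ t) (l' ++ t).
Proof.
  induction t as [|f t IH]; intros a b c l l' H Hv.
  - simpl in Hv; subst; rewrite !app_nil_r; auto.
  - simpl in Hv; destruct Hv as [H1 H2]. subst b.
    apply peq_post in H.
    replace (l ++ f :: t) with ((l ++ [f]) ++ t) by (rewrite <- app_assoc; reflexivity).
    replace (l' ++ f :: t) with ((l' ++ [f]) ++ t) by (rewrite <- app_assoc; reflexivity).
    eapply IH; eauto.
Qed.

Lemma peq_app_l (C : catpres) s : forall a b c l l',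
  valid C a s b -> peq C b c l l' -> peq C a c (s ++ l) (s ++ l').
Proof.
  induction s as [|f s IH]; intros a b c l l' Hv H.
  - simpl in Hv; subst; simpl; auto.
  - simpl in Hv; destruct Hv as [H1 H2]. subst a. simpl.
    apply peq_pre. eapply IH; eauto.
Qed.

Lemma peq_app (C : catpres) : catpres_wf C -> forall a b c l1 l1' l2 l2',
  peq C a b l1 l1' -> peq C b c l2 l2' -> peq C a c (l1 ++ l2) (l1' ++ l2').
Proof.
  intros wf a b c l1 l1' l2 l2' H1 H2.
  destruct (peq_valid wf H1) as [_ V1]. destruct (peq_valid wf H2) as [V2 _].
  eapply peq_trans. eapply peq_app_r; eauto. eapply peq_app_l; eauto.
Qed.

Lemma peq_refl' (C : catpres) : catpres_wf C -> forall a b l l',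
  peq C a b l l' -> peq C a b l l.
Proof. intros wf a b l l' H. apply peq_refl. apply (peq_valid wf H). Qed.

Definition vrel (C : catpres) (a b : cp_sort C) (x y : vpath C a b) : Prop :=
  peq C a b (proj1_sig x) (proj1_sig y).

Lemma rst_vrel (C : catpres) a b (x y : vpath C a b) :
  clos_refl_sym_trans _ (@vrel C a b) x y <-> peq C a b (proj1_sig x) (proj1_sig y).
Proof.
  split; intro H.
  - induction H.
    + exact H.
    + apply peq_refl. exact (proj2_sig x).
    + apply peq_sym; auto.
    + eapply peq_trans; eauto.
  - apply rst_step. exact H.
Qed.

Lemma cls_peq (C : catpres) a b (x y : vpath C a b) :
  peq C a b (proj1_sig x) (proj1_sig y) -> cls (@vrel C a b) x = cls (@vrel C a b) y.
Proof. intro H. apply cls_eq. apply rst_vrel. exact H. Qed.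

Lemma cls_peq_inv (C : catpres) a b (x y : vpath C a b) :
  cls (@vrel C a b) x = cls (@vrel C a b) y -> peq C a b (proj1_sig x) (proj1_sig y).
Proof. intro H. apply rst_vrel. apply cls_inj. exact H. Qed.

Lemma rep_cls_peq (C : catpres) a b (x : vpath C a b) :
  peq C a b (proj1_sig (rep (cls (@vrel C a b) x))) (proj1_sig x).
Proof. apply rst_vrel. apply rep_cls. Qed.

Definition cC (C : catpres) (a b : cp_sort C) (s : list (cp_fun C)) (H : valid C a s b)
  : sem_hom C a b := cls (@vrel C a b) (exist _ s H).

Lemma cC_peq (C : catpres) a b s s' H H' : peq C a b s s' -> @cC C a b s H = @cC C a b s' H'.
Proof. intro; apply cls_peq; auto. Qed.

Lemma cC_irr (C : catpres) a b s s' H H' : s = s' -> @cC C a b s H = @cC C a b s' H'.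
Proof. intros ->. f_equal. apply proof_irrelevance. Qed.

Lemma hom_cC (C : catpres) a b (h : sem_hom C a b) :
  h = @cC C a b (proj1_sig (rep h)) (proj2_sig (rep h)).
Proof. unfold cC. rewrite <- (cls_rep h) at 1. f_equal. destruct (rep h); reflexivity. Qed.

Lemma idm_cC (C : catpres) a : @idm (sem C) a = @cC C a a nil eq_refl.
Proof. reflexivity. Qed.

Lemma comp_cC (C : catpres) : catpres_wf C -> forall a b c s t Hs Ht H,
  @comp (sem C) a b c (@cC C a b s Hs) (@cC C b c t Ht) = @cC C a c (s ++ t) H.
Proof.
  intros wf a b c s t Hs Ht H. simpl. apply cls_peq. simpl.
  apply (peq_app wf) with (b := b); apply rep_cls_peq.
Qed.


Section TotalLemmas.
Variables (C D : catpres) (P : profpres C D).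
Hypotheses (wfC : catpres_wf C) (wfD : catpres_wf D) (wfP : profpres_wf P).

Lemma total_wf : catpres_wf (total P).
Proof.
  intros a b l l' H. simpl in H. unfold t_eq in H.
  destruct H as [[c [c' [k [k' [-> [-> [-> [-> H]]]]]]]] | [[d [d' [k [k' [-> [-> [-> [-> H]]]]]]]] | [c [d [-> [-> H]]]]]].
  - destruct (wfC _ _ _ _ H); split; apply valid_liftC; auto.
  - destruct (wfD _ _ _ _ H); split; apply valid_liftD; auto.
  - apply (wfP _ _ _ _ H).
Qed.

Lemma peq_liftC a b k k' : peq C a b k k' ->
  peq (total P) (inl a) (inl b) (map (@csym C D P) k) (map (@csym C D P) k').
Proof.
  intro H; induction H.
  - apply peq_refl. apply valid_liftC; auto.
  - apply peq_ax. simpl. left. exists a, b, l, l'. repeat split; auto.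
  - apply peq_sym; auto.
  - eapply peq_trans; eauto.
  - simpl. exact (@peq_pre (total P) (csym f) _ _ _ IHpeq).
  - rewrite !map_app. exact (@peq_post (total P) _ (csym f) _ _ IHpeq).
Qed.

Lemma peq_liftD a b k k' : peq D a b k k' ->
  peq (total P) (inr a) (inr b) (map (@dsym C D P) k) (map (@dsym C D P) k').
Proof.
  intro H; induction H.
  - apply peq_refl. apply valid_liftD; auto.
  - apply peq_ax. simpl. right; left. exists a, b, l, l'. repeat split; auto.
  - apply peq_sym; auto.
  - eapply peq_trans; eauto.
  - simpl. exact (@peq_pre (total P) (dsym f) _ _ _ IHpeq).
  - rewrite !map_app. exact (@peq_post (total P) _ (dsym f) _ _ IHpeq).
Qed.

Lemma valid_inr a u b : valid (total P) (inr a) u (inr b) ->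
  exists g, u = map (@dsym C D P) g /\ valid D a g b.
Proof.
  revert a; induction u as [|x u IH]; simpl; intros a H.
  - exists nil. inversion H; subst; simpl; auto.
  - destruct H as [H1 H2].
    destruct x as [f|[p|g]]; simpl in H1; try discriminate.
    inversion H1; subst. destruct (IH _ H2) as [g' [-> Hg]].
    exists (g :: g'). simpl. auto.
Qed.

Lemma valid_inr_inl a u b : valid (total P) (inr a) u (inl b) -> False.
Proof.
  revert a; induction u as [|x u IH]; simpl; intros a H.
  - discriminate.
  - destruct H as [H1 H2]. destruct x as [f|[p|g]]; simpl in H1; try discriminate.
    eapply IH; eauto.
Qed.

Lemma valid_inl_inl a u b : valid (total P) (inl a) u (inl b) ->
  exists s, u = map (@csym C D P) s /\ valid C a s b.
Proof.
  revert a; induction u as [|x u IH]; simpl; intros a H.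
  - exists nil. inversion H; subst; simpl; auto.
  - destruct H as [H1 H2].
    destruct x as [f|[p|g]]; simpl in H1, H2; try discriminate.
    + inversion H1; subst. destruct (IH _ H2) as [s [-> Hs]].
      exists (f :: s). simpl. auto.
    + exfalso; eapply valid_inr_inl; eauto.
Qed.

Lemma decomp c u d : valid (total P) (inl c) u (inr d) ->
  exists s p g, u = map (@csym C D P) s ++ inr (inl p) :: map (@dsym C D P) g /\
    valid C c s (pp_src P p) /\ valid D (pp_tgt P p) g d.
Proof.
  revert c; induction u as [|x u IH]; simpl; intros c H.
  - discriminate.
  - destruct H as [H1 H2].
    destruct x as [f|[p|g]]; simpl in H1, H2; try discriminate.
    + inversion H1; subst. destruct (IH _ H2) as [s [p [g [-> [Hs Hg]]]]].
      exists (f :: s), p, g. simpl. auto.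
    + inversion H1; subst. destruct (valid_inr _ _ _ H2) as [g [-> Hg]].
      exists nil, p, g. simpl. auto.
Qed.

Lemma decomp_unique s p g s' p' g' :
  map (@csym C D P) s ++ inr (inl p) :: map (@dsym C D P) g =
  map (@csym C D P) s' ++ inr (inl p') :: map (@dsym C D P) g' -> s = s' /\ p = p' /\ g = g'.
Proof.
  revert s'; induction s as [|f s IH]; intros [|f' s'] H; simpl in H.
  - injection H. intros. subst. split; auto. split; auto. clear H. revert g' H0.
    induction g as [|x g IHg]; intros [|y g2] Hg; simpl in Hg; try discriminate; auto.
    inversion Hg; subst. f_equal. auto.
  - discriminate.
  - discriminate.
  - inversion H; subst. destruct (IH _ H2) as [-> [-> ->]]; auto.
Qed.

Lemma rcp_valid c d t : is_rcp P c d t -> valid (total P) (inl c) t (inr d).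
Proof.
  intros [p [g [H1 [H2 ->]]]]. simpl. split; [subst; reflexivity|].
  apply valid_liftD; auto.
Qed.

Lemma rcp_app c a b t h : is_rcp P c a t -> valid D a h b -> is_rcp P c b (t ++ map (@dsym C D P) h).
Proof.
  intros [p [g [H1 [H2 ->]]]] Hh. exists p, (g ++ h). split; auto. split.
  - eapply valid_cat; eauto.
  - simpl. rewrite map_app. reflexivity.
Qed.

Lemma inst_eq_rcp c d t t' : inst_eq P c d t t' -> is_rcp P c d t /\ is_rcp P c d t'.
Proof.
  intro H; induction H; try tauto.
  - destruct IHinst_eq; split.
    + change (l ++ [dsym g]) with (l ++ map (@dsym C D P) [g]). apply rcp_app with (a := cp_src D g); simpl; auto.
    + change (l' ++ [dsym g]) with (l' ++ map (@dsym C D P) [g]). apply rcp_app with (a := cp_src D g); simpl; auto.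
  - destruct (wfD _ _ _ _ H0). split; apply rcp_app with (a := a); auto.
Qed.

Lemma inst_eq_sound c d t t' : inst_eq P c d t t' -> peq (total P) (inl c) (inr d) t t'.
Proof.
  intro H; induction H.
  - apply peq_ax. simpl. right; right. exists c, d. auto.
  - apply peq_refl. apply rcp_valid; auto.
  - apply peq_sym; auto.
  - eapply peq_trans; eauto.
  - exact (@peq_post (total P) _ (dsym g) _ _ IHinst_eq).
  - apply peq_app_l with (b := inr a). apply rcp_valid; auto.
    apply peq_liftD. apply peq_ax. auto.
Qed.

Lemma inst_eq_app c a t t' h : forall b, inst_eq P c a t t' -> valid D a h b ->
  inst_eq P c b (t ++ map (@dsym C D P) h) (t' ++ map (@dsym C D P) h).
Proof.
  revert a t t'; induction h as [|g h IH]; intros a t t' b H Hv.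
  - simpl in Hv; subst; simpl; rewrite !app_nil_r; auto.
  - simpl in Hv; destruct Hv as [H1 H2]. subst a.
    apply ie_post in H.
    replace (t ++ map dsym (g :: h)) with ((t ++ [dsym g]) ++ map dsym h)
      by (simpl; rewrite <- app_assoc; reflexivity).
    replace (t' ++ map dsym (g :: h)) with ((t' ++ [dsym g]) ++ map dsym h)
      by (simpl; rewrite <- app_assoc; reflexivity).
    eapply IH; eauto.
Qed.

Hypothesis ng : nongenerative P.

Lemma nf_aux c' d s : forall c, valid C c s c' -> forall t, is_rcp P c' d t ->
  exists t', is_rcp P c d t' /\ peq (total P) (inl c) (inr d) (map (@csym C D P) s ++ t) t'.
Proof.
  induction s as [|f s IH]; intros c Hs t Ht.
  - simpl in Hs; subst. exists t; split; auto. apply peq_refl. apply rcp_valid; auto.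
  - simpl in Hs. destruct Hs as [H1 H2]. subst c.
    destruct (IH _ H2 _ Ht) as [t1 [Ht1 Hp1]].
    destruct Ht1 as [p1 [g1 [E1 [V1 ->]]]].
    destruct (ng f p1 (eq_sym E1)) as [t2 [Ht2 Hp2]].
    exists (t2 ++ map dsym g1). split.
    + eapply rcp_app; eauto.
    + simpl. eapply peq_trans.
      * exact (@peq_pre (total P) (csym f) _ _ _ Hp1).
      * change (csym f :: inr (inl p1) :: map dsym g1) with ([csym f; inr (inl p1)] ++ map dsym g1).
        eapply peq_app_r; eauto. apply valid_liftD; auto.
Qed.

Lemma nongen_nf c d u : valid (total P) (inl c) u (inr d) ->
  exists t, is_rcp P c d t /\ peq (total P) (inl c) (inr d) u t.
Proof.
  intro H. destruct (decomp _ _ _ H) as [s [p [g [-> [Hs Hg]]]]].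
  apply nf_aux with (c' := pp_src P p); auto.
  exists p, g. auto.
Qed.

End TotalLemmas.

Definition nf (C D : catpres) (P : profpres C D) (c : cp_sort C) (d : cp_sort D)
  (u : list (tsym P)) : list (tsym P) :=
  match excluded_middle_informative (exists t, is_rcp P c d t /\ peq (total P) (inl c) (inr d) u t) with
  | left H => proj1_sig (constructive_indefinite_description _ H)
  | right _ => u
  end.
Arguments nf {C D} P c d u.

Lemma nf_spec (C D : catpres) (P : profpres C D) : catpres_wf C -> catpres_wf D -> profpres_wf P ->
  nongenerative P -> forall c d u, valid (total P) (inl c) u (inr d) ->
  is_rcp P c d (nf P c d u) /\ peq (total P) (inl c) (inr d) u (nf P c d u).
Proof.
  intros wfC wfD wfP ng c d u H. unfold nf.
  destruct (excluded_middle_informative _) as [H1|H1].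
  - destruct (constructive_indefinite_description _ H1) as [t Ht]. simpl. exact Ht.
  - exfalso. apply H1. apply nongen_nf; auto.
Qed.

Definition dpart (C D : catpres) (P : profpres C D) (l : list (tsym P)) : list (cp_fun D) :=
  flat_map (fun s : tsym P => match s with inr (inr g) => [g] | _ => [] end) l.
Arguments dpart {C D} P l.

Lemma dpart_map (C D : catpres) (P : profpres C D) g : dpart P (map (@dsym C D P) g) = g.
Proof. induction g; simpl; auto. rewrite IHg; auto. Qed.

Lemma dpart_app (C D : catpres) (P : profpres C D) l l' : dpart P (l ++ l') = dpart P l ++ dpart P l'.
Proof. unfold dpart. apply flat_map_app. Qed.


Lemma semP_pact (C D : catpres) (P : profpres C D) :
  catpres_wf C -> catpres_wf D -> profpres_wf P ->
  forall c c' d d' s Hs g Hg u Hu H,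
  @pact _ _ (semP P) c c' d d' (@cC C c' c s Hs) (@cC D d d' g Hg)
     (cls (@vrel (total P) (inl c) (inr d)) (exist _ u Hu)) =
  cls (@vrel (total P) (inl c') (inr d')) (exist _ (map (@csym C D P) s ++ u ++ map (@dsym C D P) g) H).
Proof.
  intros wfC wfD wfP c c' d d' s Hs g Hg u Hu H. simpl. apply cls_peq. simpl.
  rewrite app_assoc.
  assert (wfT := total_wf wfC wfD wfP).
  apply (peq_app wfT) with (b := inr d).
  - apply (peq_app wfT) with (b := inl c).
    + apply peq_liftC. exact (rep_cls_peq (exist _ s Hs)).
    + exact (rep_cls_peq (exist (fun l => valid (total P) (inl c) l (inr d)) u Hu)).
  - apply peq_liftD. exact (rep_cls_peq (exist _ g Hg)).
Qed.

Section Iface.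
Variables (C D : catpres) (P : profpres C D) (PP : Prof (sem C) (sem D)).
Variable al : forall a b, pobj PP a b -> pobj (semP P) a b.
Hypothesis bij : forall a b, exists be : pobj (semP P) a b -> pobj PP a b,
        (forall x, be (al a b x) = x) /\ (forall y, al a b (be y) = y).
Hypothesis nat : forall a a' b b' (h : hom (sem C) a' a) (k : hom (sem D) b b') (x : pobj PP a b),
        al a' b' (pact PP h k x) = pact (semP P) h k (al a b x).
Hypotheses (wfC : catpres_wf C) (wfD : catpres_wf D) (wfP : profpres_wf P).

Lemma al_inj a b (x y : pobj PP a b) : al a b x = al a b y -> x = y.
Proof.
  intro H. destruct (bij a b) as [be [H1 H2]]. rewrite <- (H1 x), <- (H1 y), H. reflexivity.
Qed.

Lemma al_surj a b (y : pobj (semP P) a b) : exists x, al a b x = y.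
Proof. destruct (bij a b) as [be [H1 H2]]. exists (be y). auto. Qed.

Definition bc a b (y : pobj (semP P) a b) : pobj PP a b :=
  proj1_sig (constructive_indefinite_description _ (al_surj y)).

Lemma al_bc a b y : al a b (@bc a b y) = y.
Proof. unfold bc. destruct (constructive_indefinite_description _ _); auto. Qed.

Lemma bc_al a b x : @bc a b (al a b x) = x.
Proof. apply al_inj. apply al_bc. Qed.

Definition bt a b (l : list (tsym P)) (H : valid (total P) (inl a) l (inr b)) : pobj PP a b :=
  @bc a b (cls (@vrel (total P) (inl a) (inr b)) (exist _ l H)).

Lemma bt_peq a b l l' H H' : peq (total P) (inl a) (inr b) l l' -> @bt a b l H = @bt a b l' H'.
Proof. intro E. unfold bt. f_equal. apply cls_peq. exact E. Qed.

Lemma bt_irr a b l l' H H' : l = l' -> @bt a b l H = @bt a b l' H'.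
Proof. intros ->. f_equal. apply proof_irrelevance. Qed.

Lemma bt_inj a b l l' H H' : @bt a b l H = @bt a b l' H' -> peq (total P) (inl a) (inr b) l l'.
Proof.
  intro E. apply (f_equal (al a b)) in E. unfold bt in E. rewrite !al_bc in E.
  exact (cls_peq_inv E).
Qed.

Lemma bt_nat a a' b b' s Hs g Hg u Hu H :
  pact PP (@cC C a' a s Hs) (@cC D b b' g Hg) (@bt a b u Hu) =
  @bt a' b' (map (@csym C D P) s ++ u ++ map (@dsym C D P) g) H.
Proof.
  apply al_inj. rewrite nat. unfold bt. rewrite !al_bc. apply semP_pact; auto.
Qed.

Lemma x_bt a b (x : pobj PP a b) :
  x = @bt a b (proj1_sig (rep (al a b x))) (proj2_sig (rep (al a b x))).
Proof.
  unfold bt. rewrite <- (@bc_al a b x) at 1. f_equal.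
  rewrite <- (cls_rep (al a b x)) at 1. f_equal. destruct (rep (al a b x)); reflexivity.
Qed.


Lemma bt_nat2 a a' b b' s Hs g Hg u Hu l H :
  l = map (@csym C D P) s ++ u ++ map (@dsym C D P) g ->
  pact PP (@cC C a' a s Hs) (@cC D b b' g Hg) (@bt a b u Hu) = @bt a' b' l H.
Proof. intros ->. apply bt_nat. Qed.

Lemma rep_al_bt a b l H : peq (total P) (inl a) (inr b) (proj1_sig (rep (al a b (@bt a b l H)))) l.
Proof. unfold bt. rewrite al_bc. apply (rep_cls_peq (exist (fun l => valid (total P) (inl a) l (inr b)) l H)). Qed.

Lemma rep_pact a a' b b' (h : hom (sem C) a' a) (k : hom (sem D) b b') (x : pobj PP a b) :
  peq (total P) (inl a') (inr b') (proj1_sig (rep (al a' b' (pact PP h k x))))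
    (map (@csym C D P) (proj1_sig (rep h)) ++ proj1_sig (rep (al a b x)) ++ map (@dsym C D P) (proj1_sig (rep k))).
Proof.
  assert (V : valid (total P) (inl a') (map (@csym C D P) (proj1_sig (rep h)) ++ proj1_sig (rep (al a b x)) ++ map (@dsym C D P) (proj1_sig (rep k))) (inr b')).
  { eapply valid_cat; [apply valid_liftC; exact (proj2_sig (rep h))|].
    eapply valid_cat; [exact (proj2_sig (rep (al a b x)))| apply valid_liftD; exact (proj2_sig (rep k))]. }
  assert (E : pact PP h k x = @bt a' b' _ V).
  { transitivity (pact PP (@cC C a' a _ (proj2_sig (rep h))) (@cC D b b' _ (proj2_sig (rep k)))
        (@bt a b _ (proj2_sig (rep (al a b x))))).
    - rewrite <- !hom_cC. rewrite <- x_bt. reflexivity.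
    - apply bt_nat2. reflexivity. }
  rewrite E. apply rep_al_bt.
Qed.

End Iface.


Section Comp.
Variables (C D E : catpres) (P : profpres C D) (Q : profpres D E).

Definition Rfun : Type := {x : (pp_fun P * pp_fun Q)%type | pp_tgt P (fst x) = pp_src Q (snd x)}.
Definition Rsrc (r : Rfun) : cp_sort C := pp_src P (fst (proj1_sig r)).
Definition Rtgt (r : Rfun) : cp_sort E := pp_tgt Q (snd (proj1_sig r)).
Definition Rsym : Type := (cp_fun C + (Rfun + cp_fun E))%type.

Definition mkR (p : pp_fun P) (q : pp_fun Q) (h : list (cp_fun E)) : list Rsym :=
  match excluded_middle_informative (pp_tgt P p = pp_src Q q) with
  | left H => inr (inl (exist _ (p, q) H)) :: map (fun g => inr (inr g)) h
  | right _ => nil end.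

Definition mkRt (p : pp_fun P) (t : list (tsym Q)) : list Rsym :=
  match t with inr (inl q) :: rest => mkR p q (dpart Q rest) | _ => nil end.

Definition G (l : list (tsym P)) (e : cp_sort E) (uQ : list (tsym Q)) : list Rsym :=
  match l with
  | inr (inl p) :: _ => mkRt p (nf Q (pp_tgt P p) e (map (@csym D E Q) (dpart P l) ++ uQ))
  | _ => nil end.

Definition eq1 (x : (cp_sort C * cp_sort D * list (tsym P) * list (tsym P))%type) (q : pp_fun Q)
  : (cp_sort C * cp_sort E * list Rsym * list Rsym)%type :=
  let '(c, d, l0, l0') := x in
  (c, pp_tgt Q q, G l0 (pp_tgt Q q) [inr (inl q)], G l0' (pp_tgt Q q) [inr (inl q)]).

Definition eq2 (y : (cp_sort D * cp_sort E * list (tsym Q) * list (tsym Q))%type) (p : pp_fun P)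
  : (cp_sort C * cp_sort E * list Rsym * list Rsym)%type :=
  let '(d, e, m, m') := y in (pp_src P p, e, mkRt p m, mkRt p m').

Definition eq3 (f : cp_fun C) (r : Rfun) : (cp_sort C * cp_sort E * list Rsym * list Rsym)%type :=
  (cp_src C f, Rtgt r, [inl f; inr (inl r)],
   G (nf P (cp_src C f) (pp_tgt P (fst (proj1_sig r))) [inl f; inr (inl (fst (proj1_sig r)))])
     (Rtgt r) [inr (inl (snd (proj1_sig r)))]).

Definition Req (c : cp_sort C) (e : cp_sort E) (l l' : list Rsym) : Prop :=
  (exists d l0 l0' q, pp_eq P c d l0 l0' /\ is_rcp P c d l0 /\ is_rcp P c d l0' /\
      pp_src Q q = d /\ eq1 (c, d, l0, l0') q = (c, e, l, l')) \/
  (exists d m m' p, pp_eq Q d e m m' /\ is_rcp Q d e m /\ is_rcp Q d e m' /\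
      pp_tgt P p = d /\ eq2 (d, e, m, m') p = (c, e, l, l')) \/
  (exists f r, cp_tgt C f = Rsrc r /\ eq3 f r = (c, e, l, l')).

Definition R : profpres C E := @ProfPres C E Rfun Rsrc Rtgt Req.

Lemma mkR_eq p q h (H : pp_tgt P p = pp_src Q q) :
  mkR p q h = inr (inl (exist _ (p, q) H)) :: map (@dsym C E R) h.
Proof.
  unfold mkR. destruct (excluded_middle_informative _) as [H'|H'].
  - replace H' with H by apply proof_irrelevance. reflexivity.
  - contradiction.
Qed.

Lemma mkR_app p q h k : pp_tgt P p = pp_src Q q ->
  mkR p q (h ++ k) = mkR p q h ++ map (@dsym C E R) k.
Proof. intro H. rewrite !(mkR_eq _ _ _ H). simpl. rewrite map_app. reflexivity. Qed.

Lemma mkRt_form p q h : mkRt p (inr (inl q) :: map (@dsym D E Q) h) = mkR p q h.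
Proof. simpl. rewrite dpart_map. reflexivity. Qed.

Lemma mkR_rcp p q h e : pp_tgt P p = pp_src Q q -> valid E (pp_tgt Q q) h e ->
  is_rcp R (pp_src P p) e (mkR p q h).
Proof.
  intros H Hh. rewrite (mkR_eq _ _ _ H). exists (exist _ (p, q) H), h. simpl. auto.
Qed.

Lemma mkRt_rcp p d e t : pp_tgt P p = d -> is_rcp Q d e t -> is_rcp R (pp_src P p) e (mkRt p t).
Proof.
  intros Hp [q [h [H1 [H2 ->]]]]. rewrite mkRt_form. apply mkR_rcp; congruence.
Qed.

Lemma mkRt_app p d a t k : pp_tgt P p = d -> is_rcp Q d a t ->
  mkRt p (t ++ map (@dsym D E Q) k) = mkRt p t ++ map (@dsym C E R) k.
Proof.
  intros Hp [q [h [H1 [H2 ->]]]]. simpl. rewrite <- map_app, !dpart_map.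
  apply mkR_app. congruence.
Qed.

Hypotheses (wfC : catpres_wf C) (wfD : catpres_wf D) (wfE : catpres_wf E)
  (wfP : profpres_wf P) (wfQ : profpres_wf Q) (cuP : curryable P) (cuQ : curryable Q).

Let wfTP := total_wf wfC wfD wfP.
Let wfTQ := total_wf wfD wfE wfQ.

Lemma nfQ_spec d e u : valid (total Q) (inl d) u (inr e) ->
  is_rcp Q d e (nf Q d e u) /\ peq (total Q) (inl d) (inr e) u (nf Q d e u).
Proof. apply nf_spec; auto. apply cuQ. Qed.

Lemma nfP_spec c d u : valid (total P) (inl c) u (inr d) ->
  is_rcp P c d (nf P c d u) /\ peq (total P) (inl c) (inr d) u (nf P c d u).
Proof. apply nf_spec; auto. apply cuP. Qed.

Lemma Phi d e t t' : inst_eq Q d e t t' -> forall p, pp_tgt P p = d ->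
  inst_eq R (pp_src P p) e (mkRt p t) (mkRt p t').
Proof.
  intro H; induction H; intros p Hp.
  - apply ie_ax.
    + simpl. right; left. exists d, l, l', p. repeat split; auto.
    + eapply mkRt_rcp; eauto.
    + eapply mkRt_rcp; eauto.
  - apply ie_refl. eapply mkRt_rcp; eauto.
  - apply ie_sym; auto.
  - eapply ie_trans; eauto.
  - destruct (inst_eq_rcp wfE H) as [H1 H2].
    change (l ++ [dsym g]) with (l ++ map (@dsym D E Q) [g]).
    change (l' ++ [dsym g]) with (l' ++ map (@dsym D E Q) [g]).
    rewrite (mkRt_app p [g] Hp H1), (mkRt_app p [g] Hp H2).
    simpl. apply ie_post. exact (IHinst_eq p Hp).
  - rewrite (mkRt_app p k Hp H), (mkRt_app p k' Hp H).
    eapply ie_deq; eauto. eapply mkRt_rcp; eauto.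
Qed.

Lemma Phi' p d e t t' : pp_tgt P p = d -> is_rcp Q d e t -> is_rcp Q d e t' ->
  peq (total Q) (inl d) (inr e) t t' -> inst_eq R (pp_src P p) e (mkRt p t) (mkRt p t').
Proof. intros Hp H1 H2 H3. apply Phi with (d := d); auto. apply cuQ; auto. Qed.

Lemma H_resp p e u u' : valid (total Q) (inl (pp_tgt P p)) u (inr e) ->
  peq (total Q) (inl (pp_tgt P p)) (inr e) u u' ->
  inst_eq R (pp_src P p) e (mkRt p (nf Q (pp_tgt P p) e u)) (mkRt p (nf Q (pp_tgt P p) e u')).
Proof.
  intros Hv Hp. destruct (peq_valid wfTQ Hp) as [_ Hv'].
  destruct (nfQ_spec _ _ _ Hv) as [R1 P1]. destruct (nfQ_spec _ _ _ Hv') as [R2 P2].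
  apply Phi' with (d := pp_tgt P p); auto.
  eapply peq_trans; [apply peq_sym; exact P1|]. eapply peq_trans; [exact Hp| exact P2].
Qed.

Lemma G_form p g e uQ :
  G (inr (inl p) :: map (@dsym C D P) g) e uQ =
  mkRt p (nf Q (pp_tgt P p) e (map (@csym D E Q) g ++ uQ)).
Proof. simpl. rewrite dpart_map. reflexivity. Qed.

Lemma G_app c d l k e uQ : is_rcp P c d l ->
  G (l ++ map (@dsym C D P) k) e uQ = G l e (map (@csym D E Q) k ++ uQ).
Proof.
  intros [p [g [H1 [H2 ->]]]]. simpl app. rewrite <- map_app, !G_form.
  rewrite map_app, app_assoc. reflexivity.
Qed.

Lemma G_rcp c d l e uQ : is_rcp P c d l -> valid (total Q) (inl d) uQ (inr e) ->
  is_rcp R c e (G l e uQ).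
Proof.
  intros [p [g [H1 [H2 ->]]]] Hv. rewrite G_form. subst c.
  eapply mkRt_rcp; [reflexivity|]. apply nfQ_spec.
  eapply valid_cat; [apply valid_liftC; exact H2| exact Hv].
Qed.

Lemma G_resp c d l e u u' : is_rcp P c d l -> valid (total Q) (inl d) u (inr e) ->
  peq (total Q) (inl d) (inr e) u u' -> inst_eq R c e (G l e u) (G l e u').
Proof.
  intros [p [g [H1 [H2 ->]]]] Hv Hp. rewrite !G_form. subst c.
  apply H_resp.
  - eapply valid_cat; [apply valid_liftC; exact H2| exact Hv].
  - eapply peq_app_l; [apply valid_liftC; exact H2| exact Hp].
Qed.

Lemma G_split c d l e uQ q h : is_rcp P c d l -> valid (total Q) (inl d) uQ (inr e) ->
  nf Q d e uQ = inr (inl q) :: map (@dsym D E Q) h -> pp_src Q q = d -> valid E (pp_tgt Q q) h e ->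
  inst_eq R c e (G l e uQ) (G l (pp_tgt Q q) [inr (inl q)] ++ map (@dsym C E R) h).
Proof.
  intros Hl Hv Hnf Hq Hh.
  destruct Hl as [p [g [H1 [H2 ->]]]]. rewrite !G_form. subst c.
  assert (Vg : valid (total Q) (inl (pp_tgt P p)) (map (@csym D E Q) g) (inl d))
    by (apply valid_liftC; exact H2).
  assert (Vq : valid (total Q) (inl d) [inr (inl q)] (inr (pp_tgt Q q)))
    by (simpl; split; [rewrite Hq|]; reflexivity).
  assert (Vgq : valid (total Q) (inl (pp_tgt P p)) (map (@csym D E Q) g ++ [inr (inl q)]) (inr (pp_tgt Q q))) by (eapply valid_cat; eauto).
  destruct (nfQ_spec _ _ _ Vgq) as [R1 P1].
  rewrite <- (mkRt_app p h eq_refl R1).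
  assert (Vgu : valid (total Q) (inl (pp_tgt P p)) (map (@csym D E Q) g ++ uQ) (inr e)) by (eapply valid_cat; eauto).
  destruct (nfQ_spec _ _ _ Vgu) as [R2 P2].
  destruct (nfQ_spec _ _ _ Hv) as [_ P3]. rewrite Hnf in P3.
  apply Phi' with (d := pp_tgt P p); auto.
  - eapply rcp_app; eauto.
  - eapply peq_trans; [apply peq_sym; exact P2|].
    eapply peq_trans; [eapply peq_app_l; [exact Vg| exact P3]|].
    assert (X : peq (total Q) (inl (pp_tgt P p)) (inr e)
      ((map (@csym D E Q) g ++ [inr (inl q)]) ++ map (@dsym D E Q) h)
      (nf Q (pp_tgt P p) (pp_tgt Q q) (map csym g ++ [inr (inl q)]) ++ map (@dsym D E Q) h)).
    { eapply peq_app_r; [exact P1|]. apply valid_liftD; auto. }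
    rewrite <- app_assoc in X. exact X.
Qed.

Lemma Psi c d l l' : inst_eq P c d l l' -> forall e uQ, valid (total Q) (inl d) uQ (inr e) ->
  inst_eq R c e (G l e uQ) (G l' e uQ).
Proof.
  intro H; induction H; intros e uQ Hv.
  - destruct (nfQ_spec _ _ _ Hv) as [[q [h [Hq [Hh Hnf]]]] _].
    eapply ie_trans; [eapply G_split; eauto|].
    eapply ie_trans; [|apply ie_sym; eapply G_split; eauto].
    eapply inst_eq_app; eauto.
    apply ie_ax.
    + simpl. left. exists d, l, l', q. repeat split; auto.
    + eapply G_rcp; eauto. simpl. split; [rewrite Hq|]; reflexivity.
    + eapply G_rcp; eauto. simpl. split; [rewrite Hq|]; reflexivity.
  - apply ie_refl. eapply G_rcp; eauto.
  - apply ie_sym; auto.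
  - eapply ie_trans; eauto.
  - destruct (inst_eq_rcp wfD H) as [H1 H2].
    change (l ++ [dsym g]) with (l ++ map (@dsym C D P) [g]).
    change (l' ++ [dsym g]) with (l' ++ map (@dsym C D P) [g]).
    rewrite (G_app [g] e uQ H1), (G_app [g] e uQ H2).
    apply IHinst_eq. simpl. auto.
  - rewrite (G_app k e uQ H), (G_app k' e uQ H).
    destruct (wfD _ _ _ _ H0) as [Vk Vk'].
    apply G_resp with (d := a); auto.
    + eapply valid_cat; [apply valid_liftC; exact Vk| exact Hv].
    + eapply peq_app_r; [|exact Hv]. apply peq_liftC. apply peq_ax. exact H0.
Qed.


Definition Fp (c : cp_sort C) (d : cp_sort D) (e : cp_sort E) (uP : list (tsym P)) (uQ : list (tsym Q))
  : list Rsym := G (nf P c d uP) e uQ.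

Lemma F_rcp c d e uP uQ : valid (total P) (inl c) uP (inr d) -> valid (total Q) (inl d) uQ (inr e) ->
  is_rcp R c e (Fp c d e uP uQ).
Proof. intros H1 H2. unfold Fp. eapply G_rcp; eauto. apply nfP_spec; auto. Qed.

Lemma F_respP c d e uP uP' uQ : peq (total P) (inl c) (inr d) uP uP' ->
  valid (total Q) (inl d) uQ (inr e) -> inst_eq R c e (Fp c d e uP uQ) (Fp c d e uP' uQ).
Proof.
  intros H Hv. destruct (peq_valid wfTP H) as [V1 V2].
  destruct (nfP_spec _ _ _ V1) as [R1 P1]. destruct (nfP_spec _ _ _ V2) as [R2 P2].
  unfold Fp. apply Psi with (d := d); auto.
  apply cuP; auto.
  eapply peq_trans; [apply peq_sym; exact P1|]. eapply peq_trans; [exact H|exact P2].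
Qed.

Lemma F_respQ c d e uP uQ uQ' : valid (total P) (inl c) uP (inr d) ->
  peq (total Q) (inl d) (inr e) uQ uQ' -> inst_eq R c e (Fp c d e uP uQ) (Fp c d e uP uQ').
Proof.
  intros Hv H. destruct (peq_valid wfTQ H) as [V1 V2]. unfold Fp.
  eapply G_resp; eauto. apply nfP_spec; auto.
Qed.

Lemma F_mid c d' d e uP g uQ : valid (total P) (inl c) uP (inr d') -> valid D d' g d ->
  valid (total Q) (inl d) uQ (inr e) ->
  inst_eq R c e (Fp c d e (uP ++ map (@dsym C D P) g) uQ) (Fp c d' e uP (map (@csym D E Q) g ++ uQ)).
Proof.
  intros H1 H2 H3. unfold Fp.
  destruct (nfP_spec _ _ _ H1) as [R1 P1].
  assert (V : valid (total P) (inl c) (uP ++ map (@dsym C D P) g) (inr d))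
    by (eapply valid_cat; [exact H1| apply valid_liftD; exact H2]).
  destruct (nfP_spec _ _ _ V) as [R2 P2].
  rewrite <- (G_app g e uQ R1).
  apply Psi with (d := d); auto.
  apply cuP; auto.
  - eapply rcp_app; eauto.
  - eapply peq_trans; [apply peq_sym; exact P2|]. eapply peq_app_r; [exact P1|].
    apply valid_liftD; auto.
Qed.

Lemma G_right c d l e e' uQ t : is_rcp P c d l -> valid (total Q) (inl d) uQ (inr e) ->
  valid E e t e' ->
  inst_eq R c e' (G l e' (uQ ++ map (@dsym D E Q) t)) (G l e uQ ++ map (@dsym C E R) t).
Proof.
  intros Hl Hv Ht. destruct Hl as [p [g [H1 [H2 ->]]]]. rewrite !G_form. subst c.
  assert (Vg : valid (total Q) (inl (pp_tgt P p)) (map (@csym D E Q) g) (inl d))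
    by (apply valid_liftC; exact H2).
  assert (V1 : valid (total Q) (inl (pp_tgt P p)) (map (@csym D E Q) g ++ uQ) (inr e))
    by (eapply valid_cat; eauto).
  assert (V2 : valid (total Q) (inl (pp_tgt P p)) (map (@csym D E Q) g ++ uQ ++ map (@dsym D E Q) t) (inr e'))
    by (eapply valid_cat; [exact Vg| eapply valid_cat; [exact Hv| apply valid_liftD; exact Ht]]).
  destruct (nfQ_spec _ _ _ V1) as [R1 P1]. destruct (nfQ_spec _ _ _ V2) as [R2 P2].
  rewrite <- (mkRt_app p t eq_refl R1).
  apply Phi' with (d := pp_tgt P p); auto.
  - eapply rcp_app; eauto.
  - eapply peq_trans; [apply peq_sym; exact P2|]. rewrite app_assoc.
    eapply peq_app_r; [exact P1|]. apply valid_liftD; auto.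
Qed.

Lemma F_right c d e e' uP uQ t : valid (total P) (inl c) uP (inr d) ->
  valid (total Q) (inl d) uQ (inr e) -> valid E e t e' ->
  inst_eq R c e' (Fp c d e' uP (uQ ++ map (@dsym D E Q) t)) (Fp c d e uP uQ ++ map (@dsym C E R) t).
Proof. intros. unfold Fp. eapply G_right; eauto. apply nfP_spec; auto. Qed.

Lemma ie_sound c e t t' : inst_eq R c e t t' -> peq (total R) (inl c) (inr e) t t'.
Proof. apply inst_eq_sound. Qed.

Let wfR_eq : forall c e l l', Req c e l l' ->
  valid (total R) (inl c) l (inr e) /\ valid (total R) (inl c) l' (inr e).
Proof.
  intros c e l l' H.
  destruct H as [[d [l0 [l0' [q [H1 [H2 [H3 [H4 H5]]]]]]]] | [[d [m [m' [p [H1 [H2 [H3 [H4 H5]]]]]]]] | [f [r [H1 H5]]]]].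
  - simpl in H5. inversion H5; subst.
    assert (Vq : valid (total Q) (inl (pp_src Q q)) [inr (inl q)] (inr (pp_tgt Q q))) by (simpl; auto).
    split; apply (@rcp_valid C E R); eapply G_rcp; eauto.
  - simpl in H5. inversion H5; subst.
    split; apply (@rcp_valid C E R); eapply mkRt_rcp; eauto.
  - destruct r as [[p q] Hr]. unfold eq3 in H5. simpl in H5. inversion H5; subst.
    split.
    + simpl. unfold Rsrc in H1. simpl in H1. rewrite H1. auto.
    + apply (@rcp_valid C E R). eapply G_rcp; eauto.
      * apply nfP_spec. simpl. rewrite H1. unfold Rsrc; simpl. auto.
      * simpl in Hr |- *; split; [f_equal; auto | reflexivity].
Qed.

Lemma R_wf : profpres_wf R.
Proof. intros c e l l' H. apply wfR_eq. exact H. Qed.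

Let wfTR := total_wf wfC wfE R_wf.

Lemma R_nongen : nongenerative R.
Proof.
  intros f r Hf. simpl in Hf |- *.
  exists (snd (eq3 f r)). destruct r as [[p q] Hr]. unfold Rsrc in Hf; simpl in Hf.
  split.
  - unfold eq3; simpl. eapply G_rcp; eauto.
    + apply nfP_spec. simpl. rewrite Hf. auto.
    + simpl in Hr |- *; split; [f_equal; auto | reflexivity].
  - apply peq_ax. simpl. right; right. exists (cp_src C f), (pp_tgt Q q). split; auto. split; auto.
    right; right. exists f, (exist _ (p, q) Hr). split; auto.
Qed.

Lemma F_left1 f d e uP uQ : valid (total P) (inl (cp_tgt C f)) uP (inr d) ->
  valid (total Q) (inl d) uQ (inr e) ->
  peq (total R) (inl (cp_src C f)) (inr e)
    (Fp (cp_src C f) d e (@csym C D P f :: uP) uQ) (@csym C E R f :: Fp (cp_tgt C f) d e uP uQ).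
Proof.
  intros H1 H2. unfold Fp.
  destruct (nfP_spec _ _ _ H1) as [R1 P1].
  destruct R1 as [p [g [Hp [Hg E1]]]]. rewrite E1 in P1 |- *.
  assert (Vfp : valid (total P) (inl (cp_src C f)) [@csym C D P f; inr (inl p)] (inr (pp_tgt P p)))
    by (simpl; rewrite Hp; auto).
  destruct (nfP_spec _ _ _ Vfp) as [R3 P3].
  assert (Vf : valid (total P) (inl (cp_src C f)) (@csym C D P f :: uP) (inr d)) by (simpl; auto).
  destruct (nfP_spec _ _ _ Vf) as [R2 P2].
  assert (Vgu : valid (total Q) (inl (pp_tgt P p)) (map (@csym D E Q) g ++ uQ) (inr e))
    by (eapply valid_cat; [apply valid_liftC; exact Hg| exact H2]).
  destruct (nfQ_spec _ _ _ Vgu) as [[q [h [Hq [Hh Eq]]]] _].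
  eapply peq_trans.
  { apply ie_sound. apply Psi with (d := d) (l' := nf P (cp_src C f) (pp_tgt P p) [@csym C D P f; inr (inl p)] ++ map (@dsym C D P) g); auto.
    apply cuP; auto. eapply rcp_app; eauto.
    eapply peq_trans; [apply peq_sym; exact P2|].
    change (@csym C D P f :: uP) with ([@csym C D P f] ++ uP).
    eapply peq_trans. eapply peq_app_l; [|exact P1]. simpl; auto.
    change ([@csym C D P f] ++ inr (inl p) :: map (@dsym C D P) g) with
      ([@csym C D P f; inr (inl p)] ++ map (@dsym C D P) g).
    eapply peq_app_r; [exact P3|]. apply valid_liftD; auto. }
  rewrite (G_app g e uQ R3).
  eapply peq_trans.
  { apply ie_sound. eapply G_split; eauto. }
  rewrite G_form, Eq, mkRt_form.
  rewrite (mkR_eq p q h (eq_sym Hq)).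
  change (@csym C E R f :: inr (inl (exist _ (p, q) (eq_sym Hq))) :: map (@dsym C E R) h) with
    ([@csym C E R f; inr (inl (exist (fun x => pp_tgt P (fst x) = pp_src Q (snd x)) (p, q) (eq_sym Hq)))] ++ map (@dsym C E R) h).
  apply peq_sym. eapply peq_app_r; [|apply valid_liftD; exact Hh].
  apply peq_ax. simpl. right; right. exists (cp_src C f), (pp_tgt Q q). split; auto. split; auto.
  right; right. exists f, (exist _ (p, q) (eq_sym Hq)). split.
  - unfold Rsrc; simpl. auto.
  - reflexivity.
Qed.


Lemma F_left c0 c d e s uP uQ : valid C c0 s c -> valid (total P) (inl c) uP (inr d) ->
  valid (total Q) (inl d) uQ (inr e) ->
  peq (total R) (inl c0) (inr e) (Fp c0 d e (map (@csym C D P) s ++ uP) uQ)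
    (map (@csym C E R) s ++ Fp c d e uP uQ).
Proof.
  revert c0; induction s as [|f s IH]; intros c0 Hs H1 H2.
  - simpl in Hs; subst. apply peq_refl. apply (@rcp_valid C E R). apply F_rcp; auto.
  - simpl in Hs; destruct Hs as [Hf Hs]. subst c0.
    assert (V : valid (total P) (inl (cp_tgt C f)) (map (@csym C D P) s ++ uP) (inr d))
      by (eapply valid_cat; [apply valid_liftC; exact Hs| exact H1]).
    eapply peq_trans; [apply F_left1; eauto|].
    simpl. exact (@peq_pre (total R) (@csym C E R f) _ _ _ (IH _ Hs H1 H2)).
Qed.

Variables (PP : Prof (sem C) (sem D)) (QQ : Prof (sem D) (sem E)).
Variable alP : forall a b, pobj PP a b -> pobj (semP P) a b.
Hypothesis bijP : forall a b, exists be : pobj (semP P) a b -> pobj PP a b,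
        (forall x, be (alP a b x) = x) /\ (forall y, alP a b (be y) = y).
Hypothesis natP : forall a a' b b' (h : hom (sem C) a' a) (k : hom (sem D) b b') (x : pobj PP a b),
        alP a' b' (pact PP h k x) = pact (semP P) h k (alP a b x).
Variable alQ : forall a b, pobj QQ a b -> pobj (semP Q) a b.
Hypothesis bijQ : forall a b, exists be : pobj (semP Q) a b -> pobj QQ a b,
        (forall x, be (alQ a b x) = x) /\ (forall y, alQ a b (be y) = y).
Hypothesis natQ : forall a a' b b' (h : hom (sem D) a' a) (k : hom (sem E) b b') (x : pobj QQ a b),
        alQ a' b' (pact QQ h k x) = pact (semP Q) h k (alQ a b x).

Definition btP := bt PP alP bijP.
Definition btQ := bt QQ alQ bijQ.

Definition mkw c e d (x : pobj PP c d) (y : pobj QQ d e) : pc_car PP QQ c e :=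
  existT (fun b : ob (sem D) => (pobj PP c b * pobj QQ b e)%type) d (x, y).
Arguments mkw {c e d} x y.

Definition K c e (w : pc_car PP QQ c e) : pobj (pcomp PP QQ) c e :=
  cls (@pc_rel _ _ _ PP QQ c e) w.
Arguments K {c e} w.

Lemma btP_peq a b l l' H H' : peq (total P) (inl a) (inr b) l l' -> btP a b l H = btP a b l' H'.
Proof. apply bt_peq. Qed.
Lemma btQ_peq a b l l' H H' : peq (total Q) (inl a) (inr b) l l' -> btQ a b l H = btQ a b l' H'.
Proof. apply bt_peq. Qed.
Lemma btP_irr a b l l' H H' : l = l' -> btP a b l H = btP a b l' H'.
Proof. apply bt_irr. Qed.
Lemma btQ_irr a b l l' H H' : l = l' -> btQ a b l H = btQ a b l' H'.
Proof. apply bt_irr. Qed.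

Lemma CL c d' d e u Hu g (Hg : valid D d' g d) w Hw H1 H2 :
  K (mkw (btP c d' u Hu) (btQ d' e (map (@csym D E Q) g ++ w) H1)) =
  K (mkw (btP c d (u ++ map (@dsym C D P) g) H2) (btQ d e w Hw)).
Proof.
  unfold K. apply cls_eq. apply rst_step.
  exists d', d, (@cC D d' d g Hg), (btP c d' u Hu), (btQ d e w Hw). split.
  - unfold mkw. f_equal. f_equal. symmetry. unfold btQ.
    rewrite idm_cC. apply bt_nat2; auto. simpl. rewrite app_nil_r. reflexivity.
  - unfold mkw. f_equal. f_equal. unfold btP. symmetry.
    rewrite idm_cC. apply bt_nat2; auto.
Qed.

Lemma VJ1 c s (r : Rfun) : valid C c s (Rsrc r) ->
  valid (total P) (inl c) (map (@csym C D P) s ++ [inr (inl (fst (proj1_sig r)))])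
    (inr (pp_tgt P (fst (proj1_sig r)))).
Proof. intro H. eapply valid_cat; [apply valid_liftC; exact H|]. simpl. auto. Qed.

Lemma VJ2 e t (r : Rfun) : valid E (Rtgt r) t e ->
  valid (total Q) (inl (pp_tgt P (fst (proj1_sig r))))
    (inr (inl (snd (proj1_sig r))) :: map (@dsym D E Q) t) (inr e).
Proof.
  intro H. destruct r as [[p q] Hr]. simpl in *. split.
  - rewrite Hr; reflexivity.
  - apply valid_liftD. exact H.
Qed.

Arguments VJ1 {c s r} _.
Arguments VJ2 {e t r} _.

Definition J c e s (r : Rfun) t (Hs : valid C c s (Rsrc r)) (Ht : valid E (Rtgt r) t e)
  : pobj (pcomp PP QQ) c e :=
  K (mkw (btP _ _ _ (VJ1 Hs)) (btQ _ _ _ (VJ2 Ht))).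
Arguments J {c e s r t} Hs Ht.

Definition Irel c e (v : list Rsym) (z : pobj (pcomp PP QQ) c e) : Prop :=
  exists s r t (Hs : valid C c s (Rsrc r)) (Ht : valid E (Rtgt r) t e),
    v = map (@csym C E R) s ++ inr (inl r) :: map (@dsym C E R) t /\ z = J Hs Ht.
Arguments Irel : clear implicits.

Lemma Irel_ex c e v : valid (total R) (inl c) v (inr e) -> exists z, Irel c e v z.
Proof.
  intro H. destruct (decomp _ _ _ H) as [s [r [t [-> [Hs Ht]]]]].
  exists (J Hs Ht). exists s, r, t, Hs, Ht. auto.
Qed.

Lemma Irel_fun c e v z z' : Irel c e v z -> Irel c e v z' -> z = z'.
Proof.
  intros [s [r [t [Hs [Ht [E1 ->]]]]]] [s' [r' [t' [Hs' [Ht' [E2 ->]]]]]].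
  rewrite E1 in E2. destruct (@decomp_unique C E R _ _ _ _ _ _ E2) as [<- [<- <-]].
  rewrite (proof_irrelevance _ Hs Hs'), (proof_irrelevance _ Ht Ht'). reflexivity.
Qed.

Lemma Irel_J c e s r t (Hs : valid C c s (Rsrc r)) (Ht : valid E (Rtgt r) t e) :
  Irel c e (map (@csym C E R) s ++ inr (inl r) :: map (@dsym C E R) t) (J Hs Ht).
Proof. exists s, r, t, Hs, Ht. auto. Qed.
Arguments Irel_J {c e s r t} Hs Ht.


Lemma Irel_conv c e v v' z z' : Irel c e v z -> v = v' -> z = z' -> Irel c e v' z'.
Proof. intros H -> ->. exact H. Qed.

Lemma K_mkw_eq c e d (x x' : pobj PP c d) (y y' : pobj QQ d e) : x = x' -> y = y' ->
  K (mkw x y) = K (mkw x' y').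
Proof. intros -> ->. reflexivity. Qed.

Lemma J_C c e s s' r t (Hs : valid C c s (Rsrc r)) (Hs' : valid C c s' (Rsrc r)) (Ht : valid E (Rtgt r) t e) :
  peq C c (Rsrc r) s s' -> J Hs Ht = J Hs' Ht.
Proof.
  intro H. unfold J. apply K_mkw_eq; [|reflexivity]. apply btP_peq.
  eapply peq_app_r; [apply peq_liftC; exact H|]. simpl. auto.
Qed.

Lemma J_E c e s r t t' (Hs : valid C c s (Rsrc r)) (Ht : valid E (Rtgt r) t e) (Ht' : valid E (Rtgt r) t' e) :
  peq E (Rtgt r) e t t' -> J Hs Ht = J Hs Ht'.
Proof.
  intro H. unfold J. apply K_mkw_eq; [reflexivity|]. apply btQ_peq.
  change (inr (inl (snd (proj1_sig r))) :: map (@dsym D E Q) t) with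
    ([@inr (cp_fun D) (pp_fun Q + cp_fun E) (inl (snd (proj1_sig r)))] ++ map (@dsym D E Q) t).
  change (inr (inl (snd (proj1_sig r))) :: map (@dsym D E Q) t') with
    ([@inr (cp_fun D) (pp_fun Q + cp_fun E) (inl (snd (proj1_sig r)))] ++ map (@dsym D E Q) t').
  eapply peq_app_l; [|apply peq_liftD; exact H].
  destruct r as [[p q] Hr]. simpl in *. split; [rewrite Hr|]; reflexivity.
Qed.

Lemma Irel_EQ2form c0 e e0 p d m x0 y0 V1 V2 : pp_tgt P p = d -> is_rcp Q d e m ->
  valid C c0 x0 (pp_src P p) -> valid E e y0 e0 ->
  Irel c0 e0 (map (@csym C E R) x0 ++ mkRt p m ++ map (@dsym C E R) y0)
    (K (mkw (btP c0 (pp_tgt P p) (map (@csym C D P) x0 ++ [inr (inl p)]) V1)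
            (btQ (pp_tgt P p) e0 (m ++ map (@dsym D E Q) y0) V2))).
Proof.
  intros Hp [q [h [Hq [Hh ->]]]] Hx Hy.
  rewrite mkRt_form.
  assert (Hpq : pp_tgt P p = pp_src Q q) by congruence.
  rewrite (mkR_eq p q h Hpq).
  set (r := exist (fun x => pp_tgt P (fst x) = pp_src Q (snd x)) (p, q) Hpq).
  assert (Hs : valid C c0 x0 (Rsrc r)) by exact Hx.
  assert (Ht : valid E (Rtgt r) (h ++ y0) e0) by (eapply valid_cat; eauto).
  eapply Irel_conv; [apply (Irel_J Hs Ht)| |].
  - simpl. rewrite map_app. reflexivity.
  - unfold J. apply K_mkw_eq.
    + apply btP_irr. reflexivity.
    + apply btQ_irr. simpl. rewrite map_app. reflexivity.
Qed.

Lemma Irel_EQ1form c0 c d e0 l0 q x0 y0 V1 V2 : is_rcp P c d l0 -> pp_src Q q = d ->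
  valid C c0 x0 c -> valid E (pp_tgt Q q) y0 e0 ->
  Irel c0 e0 (map (@csym C E R) x0 ++ G l0 (pp_tgt Q q) [inr (inl q)] ++ map (@dsym C E R) y0)
    (K (mkw (btP c0 d (map (@csym C D P) x0 ++ l0) V1)
            (btQ d e0 (inr (inl q) :: map (@dsym D E Q) y0) V2))).
Proof.
  intros Hl Hq Hx Hy. destruct Hl as [p [g [Hp [Hg ->]]]]. subst c.
  rewrite G_form.
  assert (Vg : valid (total Q) (inl (pp_tgt P p)) (map (@csym D E Q) g) (inl d))
    by (apply valid_liftC; exact Hg).
  assert (Vgq : valid (total Q) (inl (pp_tgt P p)) (map (@csym D E Q) g ++ [inr (inl q)]) (inr (pp_tgt Q q)))
    by (eapply valid_cat; [exact Vg| simpl; rewrite Hq; auto]).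
  destruct (nfQ_spec _ _ _ Vgq) as [R1 P1].
  assert (W1 : valid (total P) (inl c0) (map (@csym C D P) x0 ++ [inr (inl p)]) (inr (pp_tgt P p)))
    by (eapply valid_cat; [apply valid_liftC; exact Hx| simpl; auto]).
  assert (W2 : valid (total Q) (inl (pp_tgt P p))
      (nf Q (pp_tgt P p) (pp_tgt Q q) (map (@csym D E Q) g ++ [inr (inl q)]) ++ map (@dsym D E Q) y0) (inr e0))
    by (eapply valid_cat; [apply (@rcp_valid D E Q); exact R1| apply valid_liftD; exact Hy]).
  eapply Irel_conv; [eapply Irel_EQ2form with (V1 := W1) (V2 := W2); eauto| reflexivity|].
  assert (W3 : valid (total Q) (inl (pp_tgt P p)) (map (@csym D E Q) g ++ (inr (inl q) :: map (@dsym D E Q) y0)) (inr e0))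
    by (eapply valid_cat; [exact Vg| exact V2]).
  assert (W4 : valid (total P) (inl c0) ((map (@csym C D P) x0 ++ [inr (inl p)]) ++ map (@dsym C D P) g) (inr d))
    by (eapply valid_cat; [exact W1| apply valid_liftD; exact Hg]).
  transitivity (K (mkw (btP _ _ _ W1) (btQ _ _ _ W3))).
  - apply K_mkw_eq; [reflexivity|]. apply btQ_peq.
    eapply peq_trans; [apply peq_sym; eapply peq_app_r; [exact P1| apply valid_liftD; exact Hy]|].
    rewrite <- app_assoc. apply peq_refl. exact W3.
  - rewrite (CL _ _ _ _ _ W1 _ Hg _ V2 W3 W4). apply K_mkw_eq; [|reflexivity].
    apply btP_irr. rewrite <- app_assoc. reflexivity.
Qed.


Lemma sound_gen a b l l' : peq (total R) a b l l' -> forall c0 e0 x y z z',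
  valid (total R) (inl c0) x a -> valid (total R) b y (inr e0) ->
  Irel c0 e0 (x ++ l ++ y) z -> Irel c0 e0 (x ++ l' ++ y) z' -> z = z'.
Proof.
  intro H; induction H; intros c0 e0 x y z z' Hx Hy Hz Hz'.
  - eapply Irel_fun; eauto.
  - simpl in H. unfold t_eq in H.
    destruct H as [[c [c' [k [k' [-> [-> [-> [-> Hk]]]]]]]] | [[d [d' [k [k' [-> [-> [-> [-> Hk]]]]]]]] | [c [e [-> [-> Hl]]]]]].
    + destruct (valid_inl_inl _ _ _ Hx) as [x0 [-> Hx0]].
      destruct (decomp _ _ _ Hy) as [s1 [r [t [-> [Hs1 Ht]]]]].
      destruct (wfC _ _ _ _ Hk) as [Vk Vk'].
      assert (Hs : valid C c0 (x0 ++ k ++ s1) (Rsrc r)) by (eapply valid_cat; eauto; eapply valid_cat; eauto).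
      assert (Hs' : valid C c0 (x0 ++ k' ++ s1) (Rsrc r)) by (eapply valid_cat; eauto; eapply valid_cat; eauto).
      assert (Z1 : Irel c0 e0 (map (@csym C E R) x0 ++ map (@csym C E R) k ++ map (@csym C E R) s1 ++ inr (inl r) :: map (@dsym C E R) t) (J Hs Ht))
        by (eapply Irel_conv; [apply (Irel_J Hs Ht)| |reflexivity]; rewrite !map_app, <- !app_assoc; reflexivity).
      assert (Z2 : Irel c0 e0 (map (@csym C E R) x0 ++ map (@csym C E R) k' ++ map (@csym C E R) s1 ++ inr (inl r) :: map (@dsym C E R) t) (J Hs' Ht))
        by (eapply Irel_conv; [apply (Irel_J Hs' Ht)| |reflexivity]; rewrite !map_app, <- !app_assoc; reflexivity).
      rewrite (Irel_fun Hz Z1), (Irel_fun Hz' Z2).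
      apply J_C. eapply peq_app_l; [exact Hx0|]. eapply peq_app_r; [|exact Hs1].
      apply peq_ax; exact Hk.
    + destruct (decomp _ _ _ Hx) as [s [r [t0 [-> [Hs Ht0]]]]].
      destruct (valid_inr _ _ _ Hy) as [y0 [-> Hy0]].
      destruct (wfE _ _ _ _ Hk) as [Vk Vk'].
      assert (Ht : valid E (Rtgt r) (t0 ++ k ++ y0) e0) by (eapply valid_cat; eauto; eapply valid_cat; eauto).
      assert (Ht' : valid E (Rtgt r) (t0 ++ k' ++ y0) e0) by (eapply valid_cat; eauto; eapply valid_cat; eauto).
      assert (Z1 : Irel c0 e0 ((map (@csym C E R) s ++ inr (inl r) :: map (@dsym C E R) t0) ++ map (@dsym C E R) k ++ map (@dsym C E R) y0) (J Hs Ht))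
        by (eapply Irel_conv; [apply (Irel_J Hs Ht)| |reflexivity]; rewrite !map_app, <- !app_assoc; reflexivity).
      assert (Z2 : Irel c0 e0 ((map (@csym C E R) s ++ inr (inl r) :: map (@dsym C E R) t0) ++ map (@dsym C E R) k' ++ map (@dsym C E R) y0) (J Hs Ht'))
        by (eapply Irel_conv; [apply (Irel_J Hs Ht')| |reflexivity]; rewrite !map_app, <- !app_assoc; reflexivity).
      rewrite (Irel_fun Hz Z1), (Irel_fun Hz' Z2).
      apply J_E. eapply peq_app_l; [exact Ht0|]. eapply peq_app_r; [|exact Hy0].
      apply peq_ax; exact Hk.
    + destruct (valid_inl_inl _ _ _ Hx) as [x0 [-> Hx0]].
      destruct (valid_inr _ _ _ Hy) as [y0 [-> Hy0]].
      simpl in Hl. unfold Req in Hl.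
      destruct Hl as [[d [l0 [l0' [q [H1 [H2 [H3 [H4 H5]]]]]]]] | [[d [m [m' [p [H1 [H2 [H3 [H4 H5]]]]]]]] | [f [r [H1 H5]]]]].
      * simpl in H5. inversion H5; subst.
        assert (V1 : valid (total P) (inl c0) (map (@csym C D P) x0 ++ l0) (inr (pp_src Q q)))
          by (eapply valid_cat; [apply valid_liftC; exact Hx0| apply (@rcp_valid C D P); exact H2]).
        assert (V1' : valid (total P) (inl c0) (map (@csym C D P) x0 ++ l0') (inr (pp_src Q q)))
          by (eapply valid_cat; [apply valid_liftC; exact Hx0| apply (@rcp_valid C D P); exact H3]).
        assert (V2 : valid (total Q) (inl (pp_src Q q)) (inr (inl q) :: map (@dsym D E Q) y0) (inr e0))
          by (simpl; split; [reflexivity| apply valid_liftD; exact Hy0]).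
        eapply eq_trans; [apply (Irel_fun Hz); eapply Irel_EQ1form with (V1 := V1) (V2 := V2); eauto|].
        eapply eq_trans; [|symmetry; apply (Irel_fun Hz'); eapply Irel_EQ1form with (V1 := V1') (V2 := V2); eauto].
        apply K_mkw_eq; [|reflexivity]. apply btP_peq.
        eapply peq_app_l; [apply valid_liftC; exact Hx0|].
        apply peq_ax. simpl. right; right. exists c, (pp_src Q q). auto.
      * simpl in H5. inversion H5; subst.
        assert (V1 : valid (total P) (inl c0) (map (@csym C D P) x0 ++ [inr (inl p)]) (inr (pp_tgt P p)))
          by (eapply valid_cat; [apply valid_liftC; exact Hx0| simpl; auto]).
        assert (V2 : valid (total Q) (inl (pp_tgt P p)) (m ++ map (@dsym D E Q) y0) (inr e0))
          by (eapply valid_cat; [apply (@rcp_valid D E Q); exact H2| apply valid_liftD; exact Hy0]).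
        assert (V2' : valid (total Q) (inl (pp_tgt P p)) (m' ++ map (@dsym D E Q) y0) (inr e0))
          by (eapply valid_cat; [apply (@rcp_valid D E Q); exact H3| apply valid_liftD; exact Hy0]).
        eapply eq_trans; [apply (Irel_fun Hz); eapply Irel_EQ2form with (V1 := V1) (V2 := V2); eauto|].
        eapply eq_trans; [|symmetry; apply (Irel_fun Hz'); eapply Irel_EQ2form with (V1 := V1) (V2 := V2'); eauto].
        apply K_mkw_eq; [reflexivity|]. apply btQ_peq.
        eapply peq_app_r; [|apply valid_liftD; exact Hy0].
        apply peq_ax. simpl. right; right. exists (pp_tgt P p), e. auto.
      * destruct r as [[p q] Hr]. unfold eq3 in H5. simpl in H5. inversion H5; subst.
        unfold Rsrc in H1. simpl in H1. simpl in Hr.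
        assert (Vfp : valid (total P) (inl (cp_src C f)) [@csym C D P f; inr (inl p)] (inr (pp_tgt P p)))
          by (simpl; rewrite H1; auto).
        destruct (nfP_spec _ _ _ Vfp) as [R3 P3].
        assert (Hs : valid C c0 (x0 ++ [f]) (Rsrc (exist (fun x => pp_tgt P (fst x) = pp_src Q (snd x)) (p, q) Hr)))
          by (eapply valid_cat; [exact Hx0| simpl; unfold Rsrc; simpl; auto]).
        assert (Ht : valid E (Rtgt (exist (fun x => pp_tgt P (fst x) = pp_src Q (snd x)) (p, q) Hr)) y0 e0) by exact Hy0.
        assert (Z1 := Irel_J Hs Ht).
        rewrite (Irel_fun Hz (Irel_conv Z1 (ltac:(rewrite map_app, <- app_assoc; reflexivity)) eq_refl)).
        assert (V1 : valid (total P) (inl c0) (map (@csym C D P) x0 ++ nf P (cp_src C f) (pp_tgt P p) [@csym C D P f; inr (inl p)]) (inr (pp_tgt P p)))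
          by (eapply valid_cat; [apply valid_liftC; exact Hx0| apply (@rcp_valid C D P); exact R3]).
        assert (V2 : valid (total Q) (inl (pp_tgt P p)) (inr (inl q) :: map (@dsym D E Q) y0) (inr e0))
          by (simpl; split; [rewrite Hr; reflexivity| apply valid_liftD; exact Hy0]).
        eapply eq_trans; [|symmetry; apply (Irel_fun Hz'); eapply Irel_EQ1form with (V1 := V1) (V2 := V2); eauto].
        unfold J. apply K_mkw_eq; [|apply btQ_irr; reflexivity]. apply btP_peq.
        simpl. rewrite map_app, <- app_assoc. simpl.
        eapply peq_app_l; [apply valid_liftC; exact Hx0| exact P3].
  - eapply eq_sym, IHpeq; eauto.
  - assert (V : valid (total R) (inl c0) (x ++ l' ++ y) (inr e0)).
    { destruct (peq_valid wfTR H) as [_ V']. eapply valid_cat; [exact Hx| eapply valid_cat; eauto]. }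
    destruct (Irel_ex _ _ _ V) as [z1 Hz1].
    transitivity z1; [eapply IHpeq1|eapply IHpeq2]; eauto.
  - apply (IHpeq c0 e0 (x ++ [f]) y); auto.
    + eapply valid_cat; [exact Hx| simpl; auto].
    + rewrite <- app_assoc. exact Hz.
    + rewrite <- app_assoc. exact Hz'.
  - apply (IHpeq c0 e0 x (f :: y)); auto.
    + simpl; auto.
    + rewrite <- app_assoc in Hz. exact Hz.
    + rewrite <- app_assoc in Hz'. exact Hz'.
Qed.

Lemma sound c e v v' z z' : peq (total R) (inl c) (inr e) v v' ->
  Irel c e v z -> Irel c e v' z' -> z = z'.
Proof.
  intros H H1 H2.
  assert (A : Irel c e (nil ++ v ++ nil) z) by (simpl; rewrite app_nil_r; exact H1).
  assert (B : Irel c e (nil ++ v' ++ nil) z') by (simpl; rewrite app_nil_r; exact H2).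
  eapply (sound_gen H); [| | exact A | exact B]; simpl; auto.
Qed.


Definition uPx c d (x : pobj PP c d) : list (tsym P) := proj1_sig (rep (alP c d x)).
Definition uQy d e (y : pobj QQ d e) : list (tsym Q) := proj1_sig (rep (alQ d e y)).
Arguments uPx {c d} x.
Arguments uQy {d e} y.

Lemma uPx_valid c d (x : pobj PP c d) : valid (total P) (inl c) (uPx x) (inr d).
Proof. exact (proj2_sig (rep (alP c d x))). Qed.
Lemma uQy_valid d e (y : pobj QQ d e) : valid (total Q) (inl d) (uQy y) (inr e).
Proof. exact (proj2_sig (rep (alQ d e y))). Qed.

Arguments uPx_valid {c d} x.
Arguments uQy_valid {d e} y.

Lemma uPx_bt c d (x : pobj PP c d) H : btP c d (uPx x) H = x.
Proof. unfold btP, uPx. transitivity (bt PP alP bijP c d _ (proj2_sig (rep (alP c d x)))); [apply bt_irr; reflexivity| symmetry; apply x_bt]. Qed.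
Lemma uQy_bt d e (y : pobj QQ d e) H : btQ d e (uQy y) H = y.
Proof. unfold btQ, uQy. transitivity (bt QQ alQ bijQ d e _ (proj2_sig (rep (alQ d e y)))); [apply bt_irr; reflexivity| symmetry; apply x_bt]. Qed.

Arguments uPx_bt {c d} x H.
Arguments uQy_bt {d e} y H.

Lemma uPx_btP c d l H : peq (total P) (inl c) (inr d) (uPx (btP c d l H)) l.
Proof. apply rep_al_bt. Qed.
Lemma uQy_btQ d e l H : peq (total Q) (inl d) (inr e) (uQy (btQ d e l H)) l.
Proof. apply rep_al_bt. Qed.

Lemma rep_idm (X : catpres) a : peq X a a (proj1_sig (rep (@idm (sem X) a))) nil.
Proof. exact (rep_cls_peq (exist (fun l => valid X a l a) nil eq_refl)). Qed.

Lemma repP_h c c' d (h : hom (sem C) c' c) (x : pobj PP c d) :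
  peq (total P) (inl c') (inr d) (uPx (pact PP h (idm d) x)) (map (@csym C D P) (proj1_sig (rep h)) ++ uPx x).
Proof.
  eapply peq_trans; [apply (rep_pact PP alP bijP natP wfC wfD wfP)|].
  rewrite app_assoc.
  eapply peq_trans; [eapply peq_app_l; [eapply valid_cat; [apply valid_liftC; exact (proj2_sig (rep h))| apply uPx_valid]| exact (peq_liftD P (rep_idm D d))]|].
  simpl. rewrite app_nil_r. apply peq_refl. eapply valid_cat; [apply valid_liftC; exact (proj2_sig (rep h))| apply uPx_valid].
Qed.

Lemma repP_g c d d' (g : hom (sem D) d d') (x : pobj PP c d) :
  peq (total P) (inl c) (inr d') (uPx (pact PP (idm c) g x)) (uPx x ++ map (@dsym C D P) (proj1_sig (rep g))).
Proof.
  eapply peq_trans; [apply (rep_pact PP alP bijP natP wfC wfD wfP)|].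
  rewrite app_assoc. eapply peq_app_r; [|apply valid_liftD; exact (proj2_sig (rep g))].
  eapply peq_trans; [eapply peq_app_r; [exact (peq_liftC P (rep_idm C c))| apply uPx_valid]|].
  simpl. apply peq_refl. apply uPx_valid.
Qed.

Lemma repQ_g d d' e (g : hom (sem D) d' d) (y : pobj QQ d e) :
  peq (total Q) (inl d') (inr e) (uQy (pact QQ g (idm e) y)) (map (@csym D E Q) (proj1_sig (rep g)) ++ uQy y).
Proof.
  eapply peq_trans; [apply (rep_pact QQ alQ bijQ natQ wfD wfE wfQ)|].
  rewrite app_assoc.
  eapply peq_trans; [eapply peq_app_l; [eapply valid_cat; [apply valid_liftC; exact (proj2_sig (rep g))| apply uQy_valid]| exact (peq_liftD Q (rep_idm E e))]|].
  simpl. rewrite app_nil_r. apply peq_refl. eapply valid_cat; [apply valid_liftC; exact (proj2_sig (rep g))| apply uQy_valid].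
Qed.

Lemma repQ_k d e e' (k : hom (sem E) e e') (y : pobj QQ d e) :
  peq (total Q) (inl d) (inr e') (uQy (pact QQ (idm d) k y)) (uQy y ++ map (@dsym D E Q) (proj1_sig (rep k))).
Proof.
  eapply peq_trans; [apply (rep_pact QQ alQ bijQ natQ wfD wfE wfQ)|].
  rewrite app_assoc. eapply peq_app_r; [|apply valid_liftD; exact (proj2_sig (rep k))].
  eapply peq_trans; [eapply peq_app_r; [exact (peq_liftC Q (rep_idm D d))| apply uQy_valid]|].
  simpl. apply peq_refl. apply uQy_valid.
Qed.

Definition Fw c e (w : pc_car PP QQ c e) : list Rsym :=
  Fp c (projT1 w) e (uPx (fst (projT2 w))) (uQy (snd (projT2 w))).

Lemma Fw_rcp c e (w : pc_car PP QQ c e) : is_rcp R c e (Fw w).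
Proof. unfold Fw. apply F_rcp; [apply uPx_valid| apply uQy_valid]. Qed.

Lemma Fw_valid c e (w : pc_car PP QQ c e) : valid (total R) (inl c) (Fw w) (inr e).
Proof. apply (@rcp_valid C E R). apply Fw_rcp. Qed.

Lemma K1 c e (w w' : pc_car PP QQ c e) : pc_rel w w' -> inst_eq R c e (Fw w) (Fw w').
Proof.
  intros [b [b' [g [p [q' [-> ->]]]]]]. unfold Fw; simpl.
  assert (Vg := proj2_sig (rep g)).
  eapply ie_trans; [apply F_respQ; [apply uPx_valid| apply repQ_g]|].
  eapply ie_trans; [apply ie_sym; apply F_mid; [apply uPx_valid| exact Vg| apply uQy_valid]|].
  apply F_respP; [|apply uQy_valid]. apply peq_sym. apply repP_g.
Qed.

Lemma K1rst c e (w w' : pc_car PP QQ c e) :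
  clos_refl_sym_trans _ (@pc_rel _ _ _ PP QQ c e) w w' -> inst_eq R c e (Fw w) (Fw w').
Proof.
  intro H; induction H.
  - apply K1; auto.
  - apply ie_refl. apply Fw_rcp.
  - apply ie_sym; auto.
  - eapply ie_trans; eauto.
Qed.

Definition alR c e (z : pobj (pcomp PP QQ) c e) : pobj (semP R) c e :=
  cls (@vrel (total R) (inl c) (inr e)) (exist _ (Fw (rep z)) (Fw_valid (rep z))).

Lemma alR_K c e (w : pc_car PP QQ c e) :
  alR (K w) = cls (@vrel (total R) (inl c) (inr e)) (exist _ (Fw w) (Fw_valid w)).
Proof.
  unfold alR. apply cls_peq. simpl. apply ie_sound. apply K1rst. apply rep_cls.
Qed.

Lemma IF c e (w : pc_car PP QQ c e) : Irel c e (Fw w) (K w).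
Proof.
  destruct w as [d [x y]]. unfold Fw; simpl. unfold Fp.
  assert (Vx := uPx_valid x). assert (Vy := uQy_valid y).
  destruct (nfP_spec _ _ _ Vx) as [Rx Px].
  destruct Rx as [p [g [Hp [Hg Ex]]]]. rewrite Ex in Px |- *. rewrite G_form. subst c.
  assert (Vgu : valid (total Q) (inl (pp_tgt P p)) (map (@csym D E Q) g ++ uQy y) (inr e))
    by (eapply valid_cat; [apply valid_liftC; exact Hg| exact Vy]).
  destruct (nfQ_spec _ _ _ Vgu) as [Rq Pq].
  assert (V1 : valid (total P) (inl (pp_src P p)) (map (@csym C D P) nil ++ [inr (inl p)]) (inr (pp_tgt P p)))
    by (simpl; auto).
  assert (V2 : valid (total Q) (inl (pp_tgt P p)) (nf Q (pp_tgt P p) e (map (@csym D E Q) g ++ uQy y) ++ map (@dsym D E Q) nil) (inr e))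
    by (rewrite app_nil_r; apply (@rcp_valid D E Q); exact Rq).
  eapply Irel_conv; [eapply Irel_EQ2form with (x0 := nil) (y0 := nil) (V1 := V1) (V2 := V2); eauto; simpl; auto| |].
  - simpl. rewrite app_nil_r. reflexivity.
  - assert (W2 : valid (total P) (inl (pp_src P p)) ((map (@csym C D P) nil ++ [inr (inl p)]) ++ map (@dsym C D P) g) (inr d))
      by (eapply valid_cat; [exact V1| apply valid_liftD; exact Hg]).
    transitivity (K (mkw (btP _ _ _ V1) (btQ _ _ _ Vgu))).
    + apply K_mkw_eq; [reflexivity|]. apply btQ_peq. rewrite app_nil_r. apply peq_sym; exact Pq.
    + rewrite (CL _ _ _ _ _ V1 _ Hg _ Vy Vgu W2).
      unfold mkw, K. f_equal. f_equal. f_equal.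
      * transitivity (btP _ _ (uPx x) Vx); [apply btP_peq; apply peq_sym; exact Px | apply uPx_bt].
      * apply uQy_bt.
Qed.

Definition beR c e (V : pobj (semP R) c e) : pobj (pcomp PP QQ) c e :=
  proj1_sig (constructive_indefinite_description _ (Irel_ex _ _ _ (proj2_sig (rep V)))).

Lemma beR_spec c e (V : pobj (semP R) c e) : Irel c e (proj1_sig (rep V)) (beR V).
Proof. unfold beR. destruct (constructive_indefinite_description _ _). simpl. auto. Qed.

Lemma be_al c e (z : pobj (pcomp PP QQ) c e) : beR (alR z) = z.
Proof.
  rewrite <- (cls_rep z) at 2. fold (K (rep z)).
  eapply sound; [| apply beR_spec | apply IF].
  unfold alR. apply (rep_cls_peq (exist (fun l => valid (total R) (inl c) l (inr e)) (Fw (rep z)) (Fw_valid (rep z)))).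
Qed.

Lemma Fp_gen p q (Hr : pp_tgt P p = pp_src Q q) e t : valid E (pp_tgt Q q) t e ->
  inst_eq R (pp_src P p) e (Fp (pp_src P p) (pp_tgt P p) e [inr (inl p)] (inr (inl q) :: map (@dsym D E Q) t))
    (inr (inl (exist (fun x => pp_tgt P (fst x) = pp_src Q (snd x)) (p, q) Hr)) :: map (@dsym C E R) t).
Proof.
  intro Ht. unfold Fp.
  assert (Vp : valid (total P) (inl (pp_src P p)) [inr (inl p)] (inr (pp_tgt P p))) by (simpl; auto).
  destruct (nfP_spec _ _ _ Vp) as [R1 P1].
  assert (Vq : valid (total Q) (inl (pp_tgt P p)) (inr (inl q) :: map (@dsym D E Q) t) (inr e))
    by (simpl; split; [rewrite Hr; reflexivity| apply valid_liftD; exact Ht]).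
  eapply ie_trans.
  { apply Psi with (d := pp_tgt P p) (l' := inr (inl p) :: map (@dsym C D P) nil); auto.
    apply cuP; auto.
    - exists p, nil. simpl. auto.
    - apply peq_sym; exact P1. }
  rewrite G_form. simpl app.
  destruct (nfQ_spec _ _ _ Vq) as [R2 P2].
  eapply ie_trans.
  { apply Phi' with (d := pp_tgt P p) (t' := inr (inl q) :: map (@dsym D E Q) t); auto.
    - exists q, t. auto.
    - apply peq_sym; exact P2. }
  rewrite mkRt_form, (mkR_eq _ _ _ Hr). apply ie_refl.
  exists (exist (fun x => pp_tgt P (fst x) = pp_src Q (snd x)) (p, q) Hr), t. simpl. auto.
Qed.

Lemma Fw_J c e s r t (Hs : valid C c s (Rsrc r)) (Ht : valid E (Rtgt r) t e) :
  inst_eq R c e (Fw (rep (J Hs Ht)))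
    (Fp c (pp_tgt P (fst (proj1_sig r))) e (map (@csym C D P) s ++ [inr (inl (fst (proj1_sig r)))])
        (inr (inl (snd (proj1_sig r))) :: map (@dsym D E Q) t)).
Proof.
  eapply ie_trans; [apply K1rst; apply rep_cls|].
  unfold Fw; simpl.
  eapply ie_trans; [apply F_respP; [apply uPx_btP| apply uQy_valid]|].
  apply F_respQ; [apply (VJ1 Hs)| apply uQy_btQ].
Qed.

Lemma al_be c e (V : pobj (semP R) c e) : alR (beR V) = V.
Proof.
  assert (H := beR_spec V).
  rewrite <- (cls_rep V) at 2. unfold alR.
  transitivity (cls (@vrel (total R) (inl c) (inr e)) (rep V)); [|reflexivity].
  destruct (rep V) as [v Hv] eqn:EV. simpl in H.
  apply cls_peq. simpl.
  destruct H as [s [r [t [Hs [Ht [Ev Ez]]]]]]. rewrite Ez. rewrite Ev.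
  destruct r as [[p q] Hr]. unfold Rsrc in Hs; simpl in Hs.
  eapply peq_trans; [apply ie_sound; apply Fw_J|]. simpl.
  eapply peq_trans; [apply F_left; eauto; simpl; auto; apply (VJ2 Ht)|].
  eapply peq_app_l; [apply valid_liftC; exact Hs|].
  apply ie_sound. apply Fp_gen. exact Ht.
Qed.

Lemma R_conservative : conservative R.
Proof.
  intros c e t t' Rt Rt' H.
  destruct (Irel_ex _ _ _ (rcp_valid Rt)) as [z Hz].
  destruct (Irel_ex _ _ _ (rcp_valid Rt')) as [z' Hz'].
  assert (Ezz := sound H Hz Hz').
  assert (G0 : forall v w, is_rcp R c e v -> Irel c e v w -> inst_eq R c e (Fw (rep w)) v).
  { intros v w [r0 [h0 [Hr0 [Hh0 Ev0]]]] [s [r [u [Hs [Hu [Ev Ew]]]]]].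
    rewrite Ev0 in Ev.
    destruct (@decomp_unique C E R nil r0 h0 s r u Ev) as [<- [<- <-]].
    subst w. rewrite Ev0.
    eapply ie_trans; [apply Fw_J|].
    destruct r0 as [[p q] Hr]. simpl in Hs, Hr0 |- *. unfold Rsrc in Hs. simpl in Hs. subst c.
    apply Fp_gen. exact Hu. }
  eapply ie_trans; [apply ie_sym; apply (G0 t z); auto|].
  rewrite Ezz. apply G0; auto.
Qed.

Lemma al_nat c c' e e' (h : hom (sem C) c' c) (k : hom (sem E) e e') (z : pobj (pcomp PP QQ) c e) :
  alR (pact (pcomp PP QQ) h k z) = pact (semP R) h k (alR z).
Proof.
  set (hl := proj1_sig (rep h)). set (kl := proj1_sig (rep k)).
  assert (Vh : valid C c' hl c) by exact (proj2_sig (rep h)).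
  assert (Vk : valid E e kl e') by exact (proj2_sig (rep k)).
  assert (V : valid (total R) (inl c') (map (@csym C E R) hl ++ Fw (rep z) ++ map (@dsym C E R) kl) (inr e')).
  { eapply valid_cat; [apply valid_liftC; exact Vh|]. eapply valid_cat; [apply Fw_valid| apply valid_liftD; exact Vk]. }
  assert (E2 : pact (semP R) h k (alR z) = cls (@vrel (total R) (inl c') (inr e')) (exist (fun l => valid (total R) (inl c') l (inr e')) _ V)).
  { transitivity (pact (semP R) (@cC C c' c hl Vh) (@cC E e e' kl Vk) (alR z)).
    - f_equal; (etransitivity; [apply hom_cC| apply cC_irr; reflexivity]).
    - unfold alR. apply semP_pact; auto; apply R_wf. }
  rewrite E2.
  transitivity (alR (K (mkw (pact PP h (idm (projT1 (rep z))) (fst (projT2 (rep z))))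
                            (pact QQ (idm (projT1 (rep z))) k (snd (projT2 (rep z))))))); [reflexivity|].
  rewrite alR_K. apply cls_peq. simpl.
  revert V E2. unfold Fw. destruct (rep z) as [d [x y]]. simpl. intros V E2.
  assert (Vx := uPx_valid x). assert (Vy := uQy_valid y).
  eapply peq_trans; [apply ie_sound; apply F_respP; [apply repP_h| apply uQy_valid]|].
  eapply peq_trans; [apply ie_sound; apply F_respQ; [|apply repQ_k]|].
  { eapply valid_cat; [apply valid_liftC; exact Vh| exact Vx]. }
  eapply peq_trans; [apply ie_sound; apply F_right; eauto; eapply valid_cat; [apply valid_liftC; exact Vh| exact Vx]|].
  rewrite app_assoc. eapply peq_app_r; [|apply valid_liftD; exact Vk].
  apply F_left; auto.
Qed.

End Comp.


Lemma R_finite (C D E : catpres) (P : profpres C D) (Q : profpres D E) :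
  catpres_finite C -> profpres_finite P -> profpres_finite Q -> profpres_finite (R P Q).
Proof.
  intros [_ [[LC HC] _]] [[LP HP] [LPe HPe]] [[LQ HQ] [LQe HQe]].
  set (LR := flat_map (fun p => flat_map (fun q =>
        match excluded_middle_informative (pp_tgt P p = pp_src Q q) with
        | left H => [exist (fun x => pp_tgt P (fst x) = pp_src Q (snd x)) (p, q) H]
        | right _ => [] end) LQ) LP).
  assert (HR : forall r : Rfun P Q, In r LR).
  { intros [[p q] H]. unfold LR. apply in_flat_map. exists p. split; auto.
    apply in_flat_map. exists q. split; auto.
    destruct (excluded_middle_informative _) as [H'|H'].
    - left. simpl. replace H' with H by apply proof_irrelevance. reflexivity.
    - contradiction. }
  split.
  - exists LR. exact HR.
  - exists (flat_map (fun x => map (@eq1 C D E P Q x) LQ) LPe ++ flat_map (fun y => map (@eq2 C D E P Q y) LP) LQe ++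
            flat_map (fun f => map (@eq3 C D E P Q f) LR) LC).
    intros c e l l' H. simpl in H. unfold Req in H.
    destruct H as [[d [l0 [l0' [q [H1 [H2 [H3 [H4 H5]]]]]]]] | [[d [m [m' [p [H1 [H2 [H3 [H4 H5]]]]]]]] | [f [r [H1 H5]]]]].
    + apply in_or_app; left. apply in_flat_map. exists (c, d, l0, l0'). split; auto.
      assert (I : In (@eq1 C D E P Q (c, d, l0, l0') q) (map (@eq1 C D E P Q (c, d, l0, l0')) LQ)) by (apply in_map; auto).
      rewrite H5 in I. exact I.
    + apply in_or_app; right; apply in_or_app; left. apply in_flat_map. exists (d, e, m, m'). split; auto.
      assert (I : In (@eq2 C D E P Q (d, e, m, m') p) (map (@eq2 C D E P Q (d, e, m, m')) LP)) by (apply in_map; auto).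
      rewrite H5 in I. exact I.
    + apply in_or_app; right; apply in_or_app; right. apply in_flat_map. exists f. split; auto.
      assert (I : In (@eq3 C D E P Q f r) (map (@eq3 C D E P Q f) LR)) by (apply in_map; auto).
      rewrite H5 in I. exact I.
Qed.

Theorem mainTheorem16 (C D E : catpres) (P : profpres C D) (Q : profpres D E)
  (PP : Prof (sem C) (sem D)) (QQ : Prof (sem D) (sem E)) :
  catpres_wf C -> catpres_wf D -> catpres_wf E ->
  catpres_finite C -> catpres_finite D -> catpres_finite E ->
  is_prof PP -> is_prof QQ ->
  profpres_wf P -> profpres_wf Q ->
  profpres_finite P -> profpres_finite Q ->
  curryable P -> curryable Q ->
  prof_iso PP (semP P) -> prof_iso QQ (semP Q) ->
  exists R : profpres C E,
    profpres_wf R /\ profpres_finite R /\ curryable R /\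
    prof_iso (pcomp PP QQ) (semP R).
Proof.
  intros wfC wfD wfE fC fD fE iPP iQQ wfP wfQ fP fQ cP cQ [alP [bijP natP]] [alQ [bijQ natQ]].
  exists (R P Q). split; [|split; [|split]].
  - exact (R_wf wfC wfD wfE wfP wfQ cP cQ).
  - apply R_finite; auto.
  - split.
    + exact (R_nongen wfC wfD wfE wfP wfQ cP cQ).
    + exact (R_conservative wfC wfD wfE wfP wfQ cP cQ PP QQ alP bijP natP alQ bijQ natQ).
  - exists (alR wfC wfD wfE wfP wfQ cP cQ alP alQ). split.
    + intros a b. exists (beR PP QQ alP bijP alQ bijQ (c := a) (e := b)). split.
      * intro z. exact (be_al wfC wfD wfE wfP wfQ cP cQ alP bijP natP alQ bijQ natQ z).
      * intro V. exact (al_be wfC wfD wfE wfP wfQ cP cQ PP QQ alP bijP natP alQ bijQ natQ V).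
    + intros a a' b b' h k x. exact (al_nat wfC wfD wfE wfP wfQ cP cQ alP bijP natP alQ bijQ natQ h k x).
Qed.
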